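(* Let $\Xi$ be an orthogonal constructor rewrite system (with call-by-value rewriting) over a finite signature with constructors $\mathbf{c}_1,\dots,\mathbf{c}_g$ and function symbols $\mathbf{f}_1,\dots,\mathbf{f}_h$. Then there are $\lambda$-terms $F_{\mathbf{f}}$, one for each function symbol $\mathbf{f}$, and a natural number $k$ such that for every function symbol $\mathbf{f}$ of arity $a$ and all constructor terms $t_1,\dots,t_a$, writing $u=\mathbf{f}(t_1,\dots,t_a)$ and $M=F_{\mathbf{f}}\lceil t_1\rceil\cdots\lceil t_a\rceil$: (i) if $u$ rewrites to a constructor term $v$ in $n$ steps, then $M\rightarrow_v^{j}\lceil v\rceil$ for some $j\le kn$; (ii) if $u$ rewrites to a normal form $v$ that is not a constructor term, then $M\rightarrow_v^*\bot$; (iii) if $u$ diverges (admits an infinite rewrite sequence), then $M$ diverges (admits an infinite $\rightarrow_v$-sequence).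
   Context: A constructor rewrite system consists of a signature whose symbols are constructors or function symbols (each with an arity), and rules $\mathbf{f}(p_1,\dots,p_n)\rightarrow t$ where $\mathbf{f}$ is a function symbol, the patterns $p_i$ are built from constructors and variables, and $t$ is a term built from constructors, function symbols and variables. Orthogonal means no two distinct rules overlap and every variable occurs at most once in each left-hand side. Constructor terms are closed terms built only from constructors. Rewriting is call-by-value: a step replaces, anywhere in a term, an instance $l\sigma$ of a left-hand side by $r\sigma$, where $\sigma$ maps variables to constructor terms. A normal form is a term to which no step applies. $\lambda$-terms are $M::=x\mid\lambda x.M\mid MN$; values are $V::=x\mid\lambda x.M$. Weak call-by-value reduction $\rightarrow_v$ is the smallest relation with $(\lambda x.M)V\rightarrow_v M\{V/x\}$ for values $V$ and closed under $M\rightarrow_v N\Rightarrow ML\rightarrow_v NL$ and $LM\rightarrow_v LN$ (no reduction under $\lambda$). Scott encoding of constructor terms: $\lceil \mathbf{c}_i(t_1,\dots,t_n)\rceil=\lambda x_1.\cdots\lambda x_g.\lambda y.\,x_i\lceil t_1\rceil\cdots\lceil t_n\rceil$. The error term is $\bot=\lambda x_1.\cdots\lambda x_g.\lambda y.\,y$. *)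

(* Defs.v *)
From Stdlib Require Import List Arith.
Import ListNotations.

Inductive iter {A : Type} (R : A -> A -> Prop) : nat -> A -> A -> Prop :=
| iter0 x : iter R 0 x x
| iterS n x y z : R x y -> iter R n y z -> iter R (S n) x z.

Definition star {A : Type} (R : A -> A -> Prop) (x y : A) : Prop :=
  exists n, iter R n x y.

Definition diverges {A : Type} (R : A -> A -> Prop) (x : A) : Prop :=
  exists s : nat -> A, s 0 = x /\ forall n, R (s n) (s (S n)).

(* Constructors c_1..c_g are indexed 0..g-1 (Con i), function symbols
   f_1..f_h are indexed 0..h-1 (Fun i); arities are given by car / far. *)
Inductive term : Type :=
| Var : nat -> term
| Con : nat -> list term -> term
| Fun : nat -> list term -> term.

Fixpoint tsubst (s : nat -> term) (t : term) : term :=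
  match t with
  | Var x => s x
  | Con i ts => Con i (map (tsubst s) ts)
  | Fun i ts => Fun i (map (tsubst s) ts)
  end.

Fixpoint vars (t : term) : list nat :=
  match t with
  | Var x => [x]
  | Con _ ts => flat_map vars ts
  | Fun _ ts => flat_map vars ts
  end.

Fixpoint is_cterm (g : nat) (car : nat -> nat) (t : term) : Prop :=
  match t with
  | Var _ => False
  | Con i ts => i < g /\ length ts = car i /\ Forall (fun x => x) (map (is_cterm g car) ts)
  | Fun _ _ => False
  end.

Fixpoint is_pattern (g : nat) (car : nat -> nat) (t : term) : Prop :=
  match t with
  | Var _ => True
  | Con i ts => i < g /\ length ts = car i /\ Forall (fun x => x) (map (is_pattern g car) ts)
  | Fun _ _ => False
  end.

Fixpoint is_term (g h : nat) (car far : nat -> nat) (t : term) : Prop :=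
  match t with
  | Var _ => True
  | Con i ts => i < g /\ length ts = car i /\ Forall (fun x => x) (map (is_term g h car far) ts)
  | Fun i ts => i < h /\ length ts = far i /\ Forall (fun x => x) (map (is_term g h car far) ts)
  end.

Record rule : Type := mkRule { rfun : nat; rpats : list term; rrhs : term }.

Definition rlhs (r : rule) : term := Fun (rfun r) (rpats r).

Definition wf_rule (g h : nat) (car far : nat -> nat) (r : rule) : Prop :=
  rfun r < h /\ length (rpats r) = far (rfun r) /\
  Forall (is_pattern g car) (rpats r) /\
  is_term g h car far (rrhs r) /\
  incl (vars (rrhs r)) (vars (rlhs r)).

Definition left_linear (r : rule) : Prop := NoDup (vars (rlhs r)).

Definition overlap (r1 r2 : rule) : Prop :=
  exists s1 s2 : nat -> term, tsubst s1 (rlhs r1) = tsubst s2 (rlhs r2).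

Definition orthogonal_crs (g h : nat) (car far : nat -> nat) (R : list rule) : Prop :=
  Forall (wf_rule g h car far) R /\
  Forall left_linear R /\
  (forall i j d, i < length R -> j < length R -> i <> j ->
     ~ overlap (nth i R d) (nth j R d)).

(* call-by-value rewriting: redexes instantiated by constructor terms *)
Inductive rstep (g : nat) (car : nat -> nat) (R : list rule) : term -> term -> Prop :=
| rstep_root r s : In r R -> (forall x, is_cterm g car (s x)) ->
    rstep g car R (tsubst s (rlhs r)) (tsubst s (rrhs r))
| rstep_con i l1 l2 t t' : rstep g car R t t' ->
    rstep g car R (Con i (l1 ++ t :: l2)) (Con i (l1 ++ t' :: l2))
| rstep_fun i l1 l2 t t' : rstep g car R t t' ->
    rstep g car R (Fun i (l1 ++ t :: l2)) (Fun i (l1 ++ t' :: l2)).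

Definition rnormal (g : nat) (car : nat -> nat) (R : list rule) (t : term) : Prop :=
  forall t', ~ rstep g car R t t'.

Inductive lterm : Type :=
| LVar : nat -> lterm
| Lam : lterm -> lterm
| App : lterm -> lterm -> lterm.

Definition is_value (M : lterm) : Prop :=
  match M with LVar _ => True | Lam _ => True | App _ _ => False end.

Fixpoint lift (k : nat) (M : lterm) : lterm :=
  match M with
  | LVar n => if n <? k then LVar n else LVar (S n)
  | Lam M => Lam (lift (S k) M)
  | App M N => App (lift k M) (lift k N)
  end.

Fixpoint substk (k : nat) (N : lterm) (M : lterm) : lterm :=
  match M with
  | LVar n => if n <? k then LVar n else if n =? k then N else LVar (pred n)
  | Lam M => Lam (substk (S k) (lift 0 N) M)
  | App M1 M2 => App (substk k N M1) (substk k N M2)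
  end.

(* M{V/x} where x is the variable bound by the outermost lambda of \x.M *)
Definition lsubst (V M : lterm) : lterm := substk 0 V M.

Inductive bv : lterm -> lterm -> Prop :=
| bv_beta M V : is_value V -> bv (App (Lam M) V) (lsubst V M)
| bv_appl M N L : bv M N -> bv (App M L) (App N L)
| bv_appr L M N : bv M N -> bv (App L M) (App L N).

Fixpoint lams (n : nat) (M : lterm) : lterm :=
  match n with 0 => M | S n => Lam (lams n M) end.

Definition apps (M : lterm) (Ns : list lterm) : lterm := fold_left App Ns M.

(* Scott encoding: [c_i(t_1..t_n)] = \x_1...\x_g.\y. x_i [t_1] ... [t_n].
   With 0-based constructor index i, x_{i+1} has de Bruijn index g - i. *)
Fixpoint scott (g : nat) (t : term) : lterm :=
  match t with
  | Con i ts => lams (S g) (apps (LVar (g - i)) (map (scott g) ts))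
  | _ => LVar 0 (* irrelevant: only used on constructor terms *)
  end.

Definition lbot (g : nat) : lterm := lams (S g) (LVar 0).

(* Main.v *)
Require Import Defs.
From Stdlib Require Import List Arith Lia Classical ClassicalEpsilon.
Import ListNotations.

Fixpoint closed_at (k : nat) (M : lterm) : Prop :=
  match M with
  | LVar n => n < k
  | Lam M => closed_at (S k) M
  | App M N => closed_at k M /\ closed_at k N
  end.

Definition closed M := closed_at 0 M.

Fixpoint csub (k : nat) (l : list lterm) (M : lterm) : lterm :=
  match M with
  | LVar n => if n <? k then LVar n
              else if n - k <? length l then nth (n - k) l (LVar 0)
              else LVar (n - length l)
  | Lam M => Lam (csub (S k) l M)
  | App M N => App (csub k l M) (csub k l N)
  end.

Lemma closed_at_mono : forall M k, closed_at k M -> forall k', k <= k' -> closed_at k' M.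
Proof.
  induction M; simpl; intros.
  - lia.
  - eapply IHM; eauto; lia.
  - destruct H; split; eauto.
Qed.

Lemma closed_any M k : closed M -> closed_at k M.
Proof. intro H; eapply closed_at_mono; eauto; lia. Qed.

Lemma lift_closed : forall M k, closed_at k M -> lift k M = M.
Proof.
  induction M; simpl; intros.
  - destruct (n <? k) eqn:E; auto. apply Nat.ltb_ge in E; lia.
  - f_equal; auto.
  - destruct H; f_equal; auto.
Qed.

Lemma csub_closed : forall M k l, closed_at k M -> csub k l M = M.
Proof.
  induction M; simpl; intros.
  - destruct (n <? k) eqn:E; auto. apply Nat.ltb_ge in E; lia.
  - f_equal; auto.
  - destruct H; f_equal; auto.
Qed.

Lemma substk_csub : forall M k V, closed V -> substk k V M = csub k [V] M.
Proof.
  induction M; simpl; intros.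
  - destruct (n <? k) eqn:E; auto.
    destruct (n =? k) eqn:E2.
    + apply Nat.eqb_eq in E2; subst. rewrite Nat.sub_diag. simpl. auto.
    + apply Nat.ltb_ge in E. apply Nat.eqb_neq in E2.
      destruct (n - k <? 1) eqn:E3. apply Nat.ltb_lt in E3; lia.
      f_equal; lia.
  - rewrite lift_closed by (apply closed_any; auto). f_equal; auto.
  - f_equal; auto.
Qed.

Lemma csub_comp : forall M k l1 l2, Forall closed l1 -> Forall closed l2 ->
  csub k l1 (csub (k + length l1) l2 M) = csub k (l1 ++ l2) M.
Proof.
  induction M; simpl; intros k l1 l2 H1 H2.
  - rewrite length_app.
    destruct (n <? k + length l1) eqn:E.
    + simpl. destruct (n <? k) eqn:E1; auto.
      apply Nat.ltb_lt in E. apply Nat.ltb_ge in E1.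
      destruct (n - k <? length l1) eqn:E3; [|apply Nat.ltb_ge in E3; lia].
      destruct (n - k <? length l1 + length l2) eqn:E4; [|apply Nat.ltb_ge in E4; lia].
      rewrite app_nth1; auto. apply Nat.ltb_lt; auto.
    + apply Nat.ltb_ge in E.
      destruct (n <? k) eqn:E1; [apply Nat.ltb_lt in E1; lia|].
      destruct (n - (k + length l1) <? length l2) eqn:E3.
      * apply Nat.ltb_lt in E3.
        rewrite csub_closed.
        2:{ apply closed_any. rewrite Forall_forall in H2. apply H2. apply nth_In; auto. }
        destruct (n - k <? length l1 + length l2) eqn:E4; [|apply Nat.ltb_ge in E4; lia].
        rewrite app_nth2 by lia. f_equal. lia.
      * apply Nat.ltb_ge in E3. simpl.
        destruct (n - length l2 <? k) eqn:E5; [apply Nat.ltb_lt in E5; lia|].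
        destruct (n - length l2 - k <? length l1) eqn:E6; [apply Nat.ltb_lt in E6; lia|].
        destruct (n - k <? length l1 + length l2) eqn:E4; [apply Nat.ltb_lt in E4; lia|].
        f_equal; lia.
  - f_equal. replace (S (k + length l1)) with (S k + length l1) by lia. auto.
  - f_equal; auto.
Qed.

Lemma csub_nil : forall M k, csub k [] M = M.
Proof.
  induction M; simpl; intros.
  - destruct (n <? k); auto. f_equal; lia.
  - f_equal; auto.
  - f_equal; auto.
Qed.

Lemma csub_lams : forall n B k l, csub k l (lams n B) = lams n (csub (k + n) l B).
Proof.
  induction n; simpl; intros.
  - rewrite Nat.add_0_r; auto.
  - f_equal. rewrite IHn. replace (S k + n) with (k + S n) by lia. auto.
Qed.

Lemma apps_cons M N l : apps M (N :: l) = apps (App M N) l.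
Proof. reflexivity. Qed.

Lemma apps_app M l1 l2 : apps M (l1 ++ l2) = apps (apps M l1) l2.
Proof. unfold apps. rewrite fold_left_app. auto. Qed.

Lemma csub_apps : forall Ns M k l, csub k l (apps M Ns) = apps (csub k l M) (map (csub k l) Ns).
Proof.
  induction Ns; simpl; intros; auto.

Qed.

Lemma closed_at_lams : forall n B k, closed_at k (lams n B) <-> closed_at (k + n) B.
Proof.
  induction n; simpl; intros. rewrite Nat.add_0_r; tauto.
  rewrite IHn. replace (S k + n) with (k + S n) by lia. tauto.
Qed.

Lemma closed_at_apps : forall Ns M k, closed_at k (apps M Ns) <-> closed_at k M /\ Forall (closed_at k) Ns.
Proof.
  induction Ns; simpl; intros.
  - split; intros; [split; auto|tauto].
  - rewrite IHNs. simpl. rewrite Forall_cons_iff. tauto.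
Qed.

Lemma closed_csub : forall M k l, closed_at (k + length l) M -> Forall closed l -> closed_at k (csub k l M).
Proof.
  induction M; simpl; intros k l H1 H2.
  - destruct (n <? k) eqn:E. apply Nat.ltb_lt in E; simpl; auto.
    destruct (n - k <? length l) eqn:E2.
    + apply closed_any. rewrite Forall_forall in H2. apply H2. apply nth_In. apply Nat.ltb_lt; auto.
    + apply Nat.ltb_ge in E2. apply Nat.ltb_ge in E. simpl. lia.
  - apply IHM; auto.
  - destruct H1; split; auto.
Qed.

Lemma iter_trans {A} (Rl : A -> A -> Prop) : forall n x y, iter Rl n x y -> forall m z, iter Rl m y z -> iter Rl (n + m) x z.
Proof.
  induction 1; simpl; intros; auto. econstructor; eauto.
Qed.

Lemma iter_one {A} (Rl : A -> A -> Prop) x y : Rl x y -> iter Rl 1 x y.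
Proof. intros; econstructor; eauto; constructor. Qed.

Lemma iter_map {A B} (Rl : A -> A -> Prop) (Rl' : B -> B -> Prop) (f : A -> B) :
  (forall x y, Rl x y -> Rl' (f x) (f y)) -> forall n x y, iter Rl n x y -> iter Rl' n (f x) (f y).
Proof. intros Hf; induction 1; econstructor; eauto. Qed.

Lemma iter_eq {A} (Rl : A -> A -> Prop) n m x y : iter Rl n x y -> n = m -> iter Rl m x y.
Proof. intros; subst; auto. Qed.

Lemma bv_apps_l : forall L M M', bv M M' -> bv (apps M L) (apps M' L).
Proof. induction L; simpl; intros; auto. apply IHL. constructor; auto. Qed.

Lemma iter_apps_l n M M' L : iter bv n M M' -> iter bv n (apps M L) (apps M' L).
Proof. apply iter_map with (f := fun M => apps M L). intros; apply bv_apps_l; auto. Qed.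

Lemma iter_appl n M M' L : iter bv n M M' -> iter bv n (App M L) (App M' L).
Proof. apply iter_map with (f := fun M => App M L). intros; constructor; auto. Qed.

Lemma iter_appr n M M' L : iter bv n M M' -> iter bv n (App L M) (App L M').
Proof. apply iter_map with (f := fun M => App L M). intros; constructor; auto. Qed.

Lemma is_value_lams n B : 0 < n -> is_value (lams n B).
Proof. destruct n; simpl; auto. lia. Qed.

Lemma beta_lams : forall Vs n B, length Vs = n -> Forall closed Vs -> Forall is_value Vs ->
  iter bv n (apps (lams n B) Vs) (csub 0 (rev Vs) B).
Proof.
  induction Vs as [|V Vs IH]; simpl; intros n B Hl Hc Hv.
  - subst. simpl. rewrite csub_nil. constructor.
  - destruct n; [discriminate|]. injection Hl as Hl.
    inversion Hc; inversion Hv; subst.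
    simpl. econstructor.
    + apply bv_apps_l. constructor; auto.
    + unfold lsubst. rewrite substk_csub by auto. rewrite csub_lams. simpl.
      rewrite <- csub_comp.
      * rewrite length_rev. apply IH; auto.
      * apply Forall_rev; auto.
      * constructor; auto.
Qed.

Inductive frame := FL (N : lterm) | FR (L : lterm).
Definition plugf fr M := match fr with FL N => App M N | FR L => App L M end.
Fixpoint plug (K : list frame) M := match K with [] => M | fr :: K => plug K (plugf fr M) end.

Lemma bv_plug : forall K M M', bv M M' -> bv (plug K M) (plug K M').
Proof.
  induction K as [|[]]; simpl; intros; auto; apply IHK; constructor; auto.
Qed.

Lemma iter_plug K n M M' : iter bv n M M' -> iter bv n (plug K M) (plug K M').
Proof. apply iter_map with (f := plug K). apply bv_plug. Qed.

Lemma apps_plug : forall l M, apps M l = plug (map FL l) M.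
Proof. induction l; simpl; auto. Qed.

Lemma plug_app : forall K1 K2 M, plug (K1 ++ K2) M = plug K2 (plug K1 M).
Proof. induction K1; simpl; auto. Qed.

Lemma apps_split X pre a post :
  apps X (pre ++ a :: post) = plug (FR (apps X pre) :: map FL post) a.
Proof. rewrite apps_app. simpl. rewrite apps_plug. auto. Qed.

Lemma div_from_Q (Q : lterm -> Prop) :
  (forall M, Q M -> exists M' k, iter bv (S k) M M' /\ Q M') ->
  forall M, Q M -> diverges bv M.
Proof.
  intros HQ M0 HM0.
  set (P := fun M => exists M1 k, iter bv k M M1 /\ Q M1).
  assert (HP : forall M, P M -> exists M', bv M M' /\ P M').
  { intros M [M1 [k [Hi HQ1]]]. destruct k.
    - inversion Hi; subst. destruct (HQ _ HQ1) as [M2 [k [Hi2 HQ2]]].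
      inversion Hi2; subst. exists y; split; auto. exists M2, k; auto.
    - inversion Hi; subst. exists y; split; auto. exists M1, k; auto. }
  assert (step : {M | P M} -> {M | P M}).
  { intros [M HM]. destruct (constructive_indefinite_description _ (HP M HM)) as [M' [_ HM']].
    exact (exist _ M' HM'). }
  assert (HP0 : P M0) by (exists M0, 0; split; auto; constructor).
  clear step.
  set (step := fun (x : {M | P M}) =>
     let (M, HM) := x in
     let (M', H') := constructive_indefinite_description _ (HP M HM) in
     exist P M' (proj2 H')).
  set (sq := fun n => proj1_sig (Nat.iter n step (exist P M0 HP0))).
  exists sq. split; [reflexivity|].
  intro n. unfold sq. simpl. destruct (Nat.iter n step (exist P M0 HP0)) as [M HM].
  simpl. destruct (constructive_indefinite_description _ (HP M HM)) as [M' [H1 H2]]. simpl. auto.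
Qed.

Section TermInd.
Variable P : term -> Prop.
Hypothesis Hv : forall x, P (Var x).
Hypothesis Hc : forall i ts, Forall P ts -> P (Con i ts).
Hypothesis Hf : forall i ts, Forall P ts -> P (Fun i ts).
Fixpoint term_ind' (t : term) : P t :=
  match t with
  | Var x => Hv x
  | Con i ts => Hc i ts ((fix go l := match l return Forall P l with
                           | [] => Forall_nil _ | t :: l => Forall_cons _ (term_ind' t) (go l) end) ts)
  | Fun i ts => Hf i ts ((fix go l := match l return Forall P l with
                           | [] => Forall_nil _ | t :: l => Forall_cons _ (term_ind' t) (go l) end) ts)
  end.
End TermInd.

Lemma Forall_id_map {A} (P : A -> Prop) l : Forall (fun x => x) (map P l) <-> Forall P l.
Proof. rewrite Forall_map. tauto. Qed.

Lemma tsubst_ext : forall t s1 s2, (forall x, In x (vars t) -> s1 x = s2 x) -> tsubst s1 t = tsubst s2 t.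
Proof.
  intro t; induction t using term_ind'; simpl; intros s1 s2 H0.
  - apply H0; auto.
  - f_equal. apply map_ext_in. intros a Ha. rewrite Forall_forall in H. apply H; auto.
    intros x Hx. apply H0. apply in_flat_map. eauto.
  - f_equal. apply map_ext_in. intros a Ha. rewrite Forall_forall in H. apply H; auto.
    intros x Hx. apply H0. apply in_flat_map. eauto.
Qed.

Lemma tsubst_inj_vars : forall t s1 s2, tsubst s1 t = tsubst s2 t -> forall x, In x (vars t) -> s1 x = s2 x.
Proof.
  intro t; induction t using term_ind'; simpl; intros s1 s2 E y Hy.
  - destruct Hy as [<-|[]]; auto.
  - injection E as E. apply in_flat_map in Hy. destruct Hy as [a [Ha Hy]].
    rewrite Forall_forall in H. apply (H a Ha s1 s2); auto.
    assert (forall l, In a l -> map (tsubst s1) l = map (tsubst s2) l -> tsubst s1 a = tsubst s2 a).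
    { induction l; simpl; [tauto|]. intros [->|Hi] Hm; injection Hm; intros; auto. }
    eauto.
  - injection E as E. apply in_flat_map in Hy. destruct Hy as [a [Ha Hy]].
    rewrite Forall_forall in H. apply (H a Ha s1 s2); auto.
    assert (forall l, In a l -> map (tsubst s1) l = map (tsubst s2) l -> tsubst s1 a = tsubst s2 a).
    { induction l; simpl; [tauto|]. intros [->|Hi] Hm; injection Hm; intros; auto. }
    eauto.
Qed.

Lemma list_split_eq {A} : forall (l1 l2 m1 m2 : list A) a b, l1 ++ a :: l2 = m1 ++ b :: m2 ->
  (l1 = m1 /\ a = b /\ l2 = m2) \/ (exists k, m1 = l1 ++ a :: k /\ l2 = k ++ b :: m2) \/
  (exists k, l1 = m1 ++ b :: k /\ m2 = k ++ a :: l2).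
Proof.
  induction l1; destruct m1; simpl; intros.
  - injection H; auto.
  - injection H as E1 E2; subst. right; left. exists m1; auto.
  - injection H as E1 E2; subst. right; right. exists l1; auto.
  - injection H as E1 H. subst. destruct (IHl1 _ _ _ _ _ H) as [[-> [-> ->]]|[[k [-> ->]]|[k [-> ->]]]]; auto.
    right; left; exists k; auto. right; right; exists k; auto.
Qed.

Section TRS.
Variables (g h : nat) (car far : nat -> nat) (R : list rule).
Hypothesis HR : orthogonal_crs g h car far R.

Notation cterm := (is_cterm g car).
Notation rs := (rstep g car R).

Lemma cterm_con i ts : cterm (Con i ts) <-> i < g /\ length ts = car i /\ Forall cterm ts.
Proof. simpl. rewrite Forall_id_map. tauto. Qed.

Lemma pattern_con i ts : is_pattern g car (Con i ts) <-> i < g /\ length ts = car i /\ Forall (is_pattern g car) ts.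
Proof. simpl. rewrite Forall_id_map. tauto. Qed.

Lemma term_con i ts : is_term g h car far (Con i ts) <-> i < g /\ length ts = car i /\ Forall (is_term g h car far) ts.
Proof. simpl. rewrite Forall_id_map. tauto. Qed.

Lemma term_fun i ts : is_term g h car far (Fun i ts) <-> i < h /\ length ts = far i /\ Forall (is_term g h car far) ts.
Proof. simpl. rewrite Forall_id_map. tauto. Qed.

Lemma pattern_subst_cterm : forall p s, is_pattern g car p -> (forall x, cterm (s x)) -> cterm (tsubst s p).
Proof.
  intro p; induction p using term_ind'; intros s Hp Hs.
  - simpl; auto.
  - apply pattern_con in Hp. destruct Hp as [H1 [H2 H3]]. simpl tsubst. apply cterm_con.
    rewrite length_map. repeat split; auto.
    rewrite Forall_map. rewrite Forall_forall in *. intros; auto.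
  - destruct Hp.
Qed.

Lemma subst_cterm_vars : forall t s, cterm (tsubst s t) -> forall x, In x (vars t) -> cterm (s x).
Proof.
  intro t; induction t using term_ind'; intros s Hc y Hy.
  - simpl in *. destruct Hy as [<-|[]]; auto.
  - simpl tsubst in Hc. apply cterm_con in Hc. destruct Hc as [_ [_ Hc]].
    simpl in Hy. apply in_flat_map in Hy. destruct Hy as [a [Ha Hy]].
    rewrite Forall_forall in H. apply (H a Ha s); auto.
    rewrite Forall_map, Forall_forall in Hc. auto.
  - simpl in Hc. destruct Hc.
Qed.

Lemma rstep_con_inv i l u : rs (Con i l) u ->
  exists l1 a l2 a', l = l1 ++ a :: l2 /\ u = Con i (l1 ++ a' :: l2) /\ rs a a'.
Proof.
  intro H. remember (Con i l) as c eqn:Ec. destruct H.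
  - unfold rlhs in Ec. simpl in Ec. discriminate.
  - injection Ec as E1 E2; subst. exists l1, t, l2, t'. auto.
  - discriminate.
Qed.

Lemma rstep_fun_inv f l u : rs (Fun f l) u ->
  (exists r s, In r R /\ (forall x, cterm (s x)) /\ rfun r = f /\ l = map (tsubst s) (rpats r) /\
     u = tsubst s (rrhs r)) \/
  (exists l1 a l2 a', l = l1 ++ a :: l2 /\ u = Fun f (l1 ++ a' :: l2) /\ rs a a').
Proof.
  intro H. remember (Fun f l) as c eqn:Ec. destruct H.
  - left. unfold rlhs in Ec. simpl in Ec. injection Ec as E1 E2. exists r, s; auto.
  - discriminate.
  - right. injection Ec as E1 E2; subst. exists l1, t, l2, t'. auto.
Qed.

Lemma cterm_normal : forall t, cterm t -> forall t', ~ rs t t'.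
Proof.
  intro t; induction t using term_ind'; intros Hc t' Hs.
  - destruct Hc.
  - apply rstep_con_inv in Hs. destruct Hs as [l1 [a [l2 [a' [-> [-> Hs]]]]]].
    apply cterm_con in Hc. destruct Hc as [_ [_ Hc]].
    rewrite Forall_forall in H, Hc. apply (H a (in_elt _ _ _) (Hc a (in_elt _ _ _)) a' Hs).
  - destruct Hc.
Qed.

Lemma wf_of r : In r R -> wf_rule g h car far r.
Proof. intro Hr. destruct HR as [H _]. rewrite Forall_forall in H. auto. Qed.

Lemma linear_of r : In r R -> left_linear r.
Proof. intro Hr. destruct HR as [_ [H _]]. rewrite Forall_forall in H. auto. Qed.

Lemma ortho_unique r1 r2 s1 s2 : In r1 R -> In r2 R ->
  tsubst s1 (rlhs r1) = tsubst s2 (rlhs r2) -> r1 = r2.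
Proof.
  intros H1 H2 E. destruct HR as [_ [_ HO]].
  apply (In_nth _ _ r1) in H1. apply (In_nth _ _ r1) in H2.
  destruct H1 as [n1 [Hn1 E1]]. destruct H2 as [n2 [Hn2 E2]].
  destruct (Nat.eq_dec n1 n2).
  - subst. auto.
  - exfalso. apply (HO n1 n2 r1 Hn1 Hn2 n). rewrite E1, E2. exists s1, s2. auto.
Qed.

Lemma rule_args_cterm r s : In r R -> (forall x, cterm (s x)) -> Forall cterm (map (tsubst s) (rpats r)).
Proof.
  intros Hr Hs. destruct (wf_of r Hr) as [_ [_ [Hp _]]].
  rewrite Forall_map. rewrite Forall_forall in *. intros. apply pattern_subst_cterm; auto.
Qed.

Lemma root_unique r1 r2 s1 s2 : In r1 R -> In r2 R ->
  tsubst s1 (rlhs r1) = tsubst s2 (rlhs r2) -> tsubst s1 (rrhs r1) = tsubst s2 (rrhs r2).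
Proof.
  intros H1 H2 E. pose proof (ortho_unique _ _ _ _ H1 H2 E); subst.
  apply tsubst_ext. intros x Hx. apply (tsubst_inj_vars _ _ _ E).
  destruct (wf_of r2 H2) as [_ [_ [_ [_ Hi]]]]. auto.
Qed.

Lemma root_vs_ctx r s f l1 a l2 a' : In r R -> (forall x, cterm (s x)) ->
  tsubst s (rlhs r) = Fun f (l1 ++ a :: l2) -> ~ rs a a'.
Proof.
  intros Hr Hs E. unfold rlhs in E. simpl in E. injection E as _ E.
  pose proof (rule_args_cterm r s Hr Hs) as Hc. rewrite E in Hc.
  rewrite Forall_forall in Hc. apply cterm_normal. apply Hc. apply in_elt.
Qed.

Lemma diamond : forall t t1 t2, rs t t1 -> rs t t2 -> t1 = t2 \/ exists w, rs t1 w /\ rs t2 w.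
Proof.
  intros t t1 t2 H1. revert t2. induction H1; intros t2 H2.
  - unfold rlhs in H2 at 1. simpl in H2. apply rstep_fun_inv in H2.
    destruct H2 as [[r' [s' [Hr' [Hs' [Ef [El ->]]]]]]|[l1 [a [l2 [a' [El [-> Ha]]]]]]].
    + left. apply root_unique; auto. unfold rlhs. simpl. rewrite Ef, <- El. auto.
    + exfalso. eapply root_vs_ctx; eauto. unfold rlhs. simpl. rewrite El. reflexivity.
  - apply rstep_con_inv in H2. destruct H2 as [m1 [b [m2 [b' [El [-> Hb]]]]]].
    destruct (list_split_eq _ _ _ _ _ _ El) as [[-> [-> ->]]|[[k [-> ->]]|[k [-> ->]]]].
    + destruct (IHrstep _ Hb) as [->|[w [Hw1 Hw2]]]; auto.
      right. exists (Con i (m1 ++ w :: m2)). split; constructor; auto.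
    + right. exists (Con i (l1 ++ t' :: k ++ b' :: m2)). split.
      * replace (l1 ++ t' :: k ++ b :: m2) with ((l1 ++ t' :: k) ++ b :: m2) by (rewrite <- app_assoc; auto).
        replace (l1 ++ t' :: k ++ b' :: m2) with ((l1 ++ t' :: k) ++ b' :: m2) by (rewrite <- app_assoc; auto).
        constructor; auto.
      * rewrite <- app_assoc. simpl. constructor; auto.
    + right. exists (Con i (m1 ++ b' :: k ++ t' :: l2)). split.
      * rewrite <- app_assoc. simpl. constructor; auto.
      * replace (m1 ++ b' :: k ++ t :: l2) with ((m1 ++ b' :: k) ++ t :: l2) by (rewrite <- app_assoc; auto).
        replace (m1 ++ b' :: k ++ t' :: l2) with ((m1 ++ b' :: k) ++ t' :: l2) by (rewrite <- app_assoc; auto).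
        constructor; auto.
  - apply rstep_fun_inv in H2.
    destruct H2 as [[r' [s' [Hr' [Hs' [Ef [El ->]]]]]]|[m1 [b [m2 [b' [El [-> Hb]]]]]]].
    + exfalso. eapply root_vs_ctx; eauto. unfold rlhs. simpl. rewrite Ef, <- El. reflexivity.
    + destruct (list_split_eq _ _ _ _ _ _ El) as [[-> [-> ->]]|[[k [-> ->]]|[k [-> ->]]]].
      * destruct (IHrstep _ Hb) as [->|[w [Hw1 Hw2]]]; auto.
        right. exists (Fun i (m1 ++ w :: m2)). split; constructor; auto.
      * right. exists (Fun i (l1 ++ t' :: k ++ b' :: m2)). split.
        -- replace (l1 ++ t' :: k ++ b :: m2) with ((l1 ++ t' :: k) ++ b :: m2) by (rewrite <- app_assoc; auto).
           replace (l1 ++ t' :: k ++ b' :: m2) with ((l1 ++ t' :: k) ++ b' :: m2) by (rewrite <- app_assoc; auto).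
           constructor; auto.
        -- rewrite <- app_assoc. simpl. constructor; auto.
      * right. exists (Fun i (m1 ++ b' :: k ++ t' :: l2)). split.
        -- rewrite <- app_assoc. simpl. constructor; auto.
        -- replace (m1 ++ b' :: k ++ t :: l2) with ((m1 ++ b' :: k) ++ t :: l2) by (rewrite <- app_assoc; auto).
           replace (m1 ++ b' :: k ++ t' :: l2) with ((m1 ++ b' :: k) ++ t' :: l2) by (rewrite <- app_assoc; auto).
           constructor; auto.
Qed.

Lemma bounded1 : forall n t v, iter rs n t v -> rnormal g car R v ->
  forall t1, rs t t1 -> exists n', n = S n' /\ iter rs n' t1 v.
Proof.
  induction 1 as [x|n x y z Hxy Hyz IH]; intros Hn t1 H1.
  - exfalso. eapply Hn; eauto.
  - exists n. split; auto.
    destruct (diamond _ _ _ H1 Hxy) as [->|[w [Hw1 Hw2]]]; auto.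
    destruct (IH Hn w Hw2) as [n' [-> Hw]]. econstructor; eauto.
Qed.

Lemma bounded_iter : forall m t u, iter rs m t u -> forall n v, iter rs n t v -> rnormal g car R v ->
  m <= n /\ iter rs (n - m) u v.
Proof.
  induction 1 as [x|m x y z Hxy Hyz IH]; intros n v Hv Hn.
  - rewrite Nat.sub_0_r. auto with arith.
  - destruct (bounded1 _ _ _ Hv Hn _ Hxy) as [n' [-> Hy]].
    destruct (IH _ _ Hy Hn). split; [lia|]. simpl. auto.
Qed.

Lemma nf_unique n t v m u : iter rs n t v -> rnormal g car R v -> iter rs m t u -> rnormal g car R u ->
  n = m /\ u = v.
Proof.
  intros H1 H2 H3 H4. destruct (bounded_iter _ _ _ H3 _ _ H1 H2) as [Hle Hi].
  destruct (n - m) eqn:E.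
  - inversion Hi; subst. split; auto; lia.
  - inversion Hi; subst. exfalso. eapply H4; eauto.
Qed.

Lemma nf_no_div n t v : iter rs n t v -> rnormal g car R v -> ~ diverges rs t.
Proof.
  intros H1 H2 [sq [H0 Hs]].
  assert (forall k, iter rs k t (sq k)).
  { induction k. rewrite H0. constructor.
    replace (S k) with (k + 1) by lia. apply iter_trans with (y := sq k); auto. apply iter_one; auto.
  rewrite Nat.add_1_r; auto.
  }
  destruct (bounded_iter _ _ _ (H (S n)) _ _ H1 H2). lia.
Qed.

Definition osome (l : list (option term)) : option (list term) :=
  fold_right (fun o acc => match o, acc with Some v, Some vs => Some (v :: vs) | _, _ => None end) (Some []) l.

Lemma osome_some : forall l vs, osome l = Some vs <-> l = map Some vs.
Proof.
  intros l; induction l as [|o l IH]; intros vs; simpl.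
  - split; intro H. injection H as <-; auto. destruct vs; simpl in *; congruence.
  - destruct o as [v|].
    + destruct (osome l) as [vs'|] eqn:E.
      * split; intro H. injection H as <-. simpl. f_equal. apply IH; auto.
        destruct vs; simpl in H; [discriminate|]. injection H as -> H. apply IH in H. congruence.
      * split; intro H; [discriminate|]. destruct vs; simpl in H; [discriminate|].
        injection H as -> H. apply IH in H. congruence.
    + split; intro H; [discriminate|]. destruct vs; simpl in H; discriminate.
Qed.

Definition matches_cterm f vs := exists r s, In r R /\ rfun r = f /\ (forall x, cterm (s x)) /\
  map (tsubst s) (rpats r) = vs.

Inductive E : (nat -> term) -> term -> option term -> nat -> Prop :=
| E_var s x : E s (Var x) (Some (s x)) 0
| E_con s i ts os n : Es s ts os n -> E s (Con i ts) (option_map (Con i) (osome os)) n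
| E_err s f ts os n : Es s ts os n -> osome os = None -> E s (Fun f ts) None n
| E_nom s f ts os vs n : Es s ts os n -> osome os = Some vs -> ~ matches_cterm f vs -> E s (Fun f ts) None n
| E_rule s f ts os vs n r sg o m : Es s ts os n -> osome os = Some vs -> In r R -> rfun r = f ->
    (forall x, cterm (sg x)) -> map (tsubst sg) (rpats r) = vs -> E sg (rrhs r) o m ->
    E s (Fun f ts) o (n + S m)
with Es : (nat -> term) -> list term -> list (option term) -> nat -> Prop :=
| Es_nil s : Es s [] [] 0
| Es_cons s t ts o os n m : E s t o n -> Es s ts os m -> Es s (t :: ts) (o :: os) (n + m).

Scheme E_mut := Induction for E Sort Prop with Es_mut := Induction for Es Sort Prop.
Combined Scheme E_Es_mut from E_mut, Es_mut.

Lemma iter_ctx_con i l1 l2 n a a' : iter rs n a a' -> iter rs n (Con i (l1 ++ a :: l2)) (Con i (l1 ++ a' :: l2)).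
Proof. apply iter_map with (f := fun x => Con i (l1 ++ x :: l2)). intros; constructor; auto. Qed.

Lemma iter_ctx_fun i l1 l2 n a a' : iter rs n a a' -> iter rs n (Fun i (l1 ++ a :: l2)) (Fun i (l1 ++ a' :: l2)).
Proof. apply iter_map with (f := fun x => Fun i (l1 ++ x :: l2)). intros; constructor; auto. Qed.

Inductive liter : list term -> list term -> nat -> Prop :=
| liter_nil : liter [] [] 0
| liter_cons a a' n l l' m : iter rs n a a' -> liter l l' m -> liter (a :: l) (a' :: l') (n + m).

Lemma liter_con : forall l l' n, liter l l' n -> forall pre i, iter rs n (Con i (pre ++ l)) (Con i (pre ++ l')).
Proof.
  induction 1; intros pre i. constructor.
  apply iter_trans with (y := Con i (pre ++ a' :: l)). apply iter_ctx_con; auto.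
  replace (pre ++ a' :: l) with ((pre ++ [a']) ++ l) by (rewrite <- app_assoc; auto).
  replace (pre ++ a' :: l') with ((pre ++ [a']) ++ l') by (rewrite <- app_assoc; auto). auto.
Qed.

Lemma liter_fun : forall l l' n, liter l l' n -> forall pre i, iter rs n (Fun i (pre ++ l)) (Fun i (pre ++ l')).
Proof.
  induction 1; intros pre i. constructor.
  apply iter_trans with (y := Fun i (pre ++ a' :: l)). apply iter_ctx_fun; auto.
  replace (pre ++ a' :: l) with ((pre ++ [a']) ++ l) by (rewrite <- app_assoc; auto).
  replace (pre ++ a' :: l') with ((pre ++ [a']) ++ l') by (rewrite <- app_assoc; auto). auto.
Qed.

Definition resrel (o : option term) (w : term) : Prop :=
  match o with Some v => w = v /\ cterm v | None => rnormal g car R w /\ ~ cterm w end.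

Lemma resrel_normal o w : resrel o w -> rnormal g car R w.
Proof. destruct o; simpl; intros [H1 H2]; auto. subst. intro; apply cterm_normal; auto. Qed.

Lemma resrel_some : forall os ws, Forall2 resrel os ws -> forall vs, os = map Some vs -> ws = vs /\ Forall cterm vs.
Proof.
  induction 1; intros vs E. destruct vs; [auto|discriminate].
  destruct vs; [discriminate|]. injection E as -> E. destruct (IHForall2 _ E) as [-> H2].
  destruct H as [-> H]. auto.
Qed.

Lemma resrel_none : forall os ws, Forall2 resrel os ws -> osome os = None -> exists w, In w ws /\ ~ cterm w.
Proof.
  induction 1; simpl; intros E. discriminate.
  destruct x as [v|].
  - destruct (osome l) eqn:E2; [discriminate|]. destruct (IHForall2 eq_refl) as [w [Hw Hc]]. eauto.
  - exists y. destruct H. auto.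
Qed.

Lemma con_normal i ws : Forall (rnormal g car R) ws -> rnormal g car R (Con i ws).
Proof.
  intros H t' Hs. apply rstep_con_inv in Hs. destruct Hs as [l1 [a [l2 [a' [-> [_ Hs]]]]]].
  rewrite Forall_forall in H. eapply (H a (in_elt _ _ _)); eauto.
Qed.

Lemma fun_normal f ws : Forall (rnormal g car R) ws -> ~ matches_cterm f ws -> rnormal g car R (Fun f ws).
Proof.
  intros H Hm t' Hs. apply rstep_fun_inv in Hs.
  destruct Hs as [[r [s [Hr [Hs [Ef [El _]]]]]]|[l1 [a [l2 [a' [-> [_ Hs]]]]]]].
  - apply Hm. exists r, s. auto.
  - rewrite Forall_forall in H. eapply (H a (in_elt _ _ _)); eauto.
Qed.

Lemma Forall2_normal os ws : Forall2 resrel os ws -> Forall (rnormal g car R) ws.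
Proof. induction 1; constructor; eauto using resrel_normal. Qed.

Lemma Forall2_length' {A B} (P : A -> B -> Prop) l1 l2 : Forall2 P l1 l2 -> length l1 = length l2.
Proof. induction 1; simpl; auto. Qed.

Lemma Es_length s ts os n : Es s ts os n -> length ts = length os.
Proof. induction 1; simpl; auto. Qed.

Lemma sound :
  (forall s t o n, E s t o n -> (forall x, cterm (s x)) -> is_term g h car far t ->
     exists w, iter rs n (tsubst s t) w /\ resrel o w) /\
  (forall s ts os n, Es s ts os n -> (forall x, cterm (s x)) -> Forall (is_term g h car far) ts ->
     exists ws, liter (map (tsubst s) ts) ws n /\ Forall2 resrel os ws).
Proof.
  apply E_Es_mut.
  - intros s x Hs _. exists (s x). split. constructor. simpl; auto.
  - intros s i ts os n HE IH Hs Ht. apply term_con in Ht. destruct Ht as [Hi [Hl Ht]].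
    destruct (IH Hs Ht) as [ws [Hli HF]].
    exists (Con i ws). split. simpl. apply (liter_con _ _ _ Hli [] i).
    destruct (osome os) as [vs|] eqn:E1.
    + apply osome_some in E1. destruct (resrel_some _ _ HF _ E1) as [-> Hc]. simpl. split; auto.
      apply cterm_con. repeat split; auto. subst.
      apply Es_length in HE. rewrite length_map in HE. congruence.
    + simpl. split. apply con_normal. eapply Forall2_normal; eauto.
      intro Hc. apply cterm_con in Hc. destruct Hc as [_ [_ Hc]].
      destruct (resrel_none _ _ HF E1) as [w [Hw Hnc]]. rewrite Forall_forall in Hc. auto.
  - intros s f ts os n HE IH E1 Hs Ht. apply term_fun in Ht. destruct Ht as [Hi [Hl Ht]].
    destruct (IH Hs Ht) as [ws [Hli HF]].
    exists (Fun f ws). split. simpl. apply (liter_fun _ _ _ Hli [] f).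
    simpl. split; [|simpl; auto]. apply fun_normal. eapply Forall2_normal; eauto.
    intros [r [s' [Hr [Ef [Hs' Em]]]]].
    destruct (resrel_none _ _ HF E1) as [w [Hw Hnc]].
    pose proof (rule_args_cterm r s' Hr Hs') as Hc. rewrite Em in Hc.
    rewrite Forall_forall in Hc. auto.
  - intros s f ts os vs n HE IH E1 Hm Hs Ht. apply term_fun in Ht. destruct Ht as [Hi [Hl Ht]].
    destruct (IH Hs Ht) as [ws [Hli HF]].
    apply osome_some in E1. destruct (resrel_some _ _ HF _ E1) as [-> Hc].
    exists (Fun f vs). split. simpl. apply (liter_fun _ _ _ Hli [] f).
    simpl. split; [|simpl; auto]. apply fun_normal; auto.
    rewrite Forall_forall in *. intros x Hx t'. apply cterm_normal. auto.
  - intros s f ts os vs n r sg o m HE IH E1 Hr Ef Hsg Em HE2 IH2 Hs Ht.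
    apply term_fun in Ht. destruct Ht as [Hi [Hl Ht]].
    destruct (IH Hs Ht) as [ws [Hli HF]].
    apply osome_some in E1. destruct (resrel_some _ _ HF _ E1) as [-> Hc].
    destruct (wf_of r Hr) as [_ [_ [_ [Hrt _]]]].
    destruct (IH2 Hsg Hrt) as [w [Hw Hrel]].
    exists w. split; auto.
    apply iter_trans with (y := Fun f vs). simpl. apply (liter_fun _ _ _ Hli [] f).
    econstructor; [|exact Hw].
    replace (Fun f vs) with (tsubst sg (rlhs r)). constructor; auto.
    unfold rlhs. simpl. congruence.
  - intros s _ _. exists []. split; constructor.
  - intros s t ts o os n m HE IH HEs IHs Hs Ht. inversion Ht; subst.
    destruct (IH Hs H1) as [w [Hw Hr]]. destruct (IHs Hs H2) as [ws [Hws Hrs]].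
    exists (w :: ws). split. simpl. constructor; auto. constructor; auto.
Qed.

Lemma Es_exists s : forall ts, Forall (fun t => exists o k, E s t o k) ts -> exists os k, Es s ts os k.
Proof.
  induction 1. exists [], 0; constructor.
  destruct H as [o [k H]]. destruct IHForall as [os [k' H']]. exists (o :: os), (k + k'). constructor; auto.
Qed.

Lemma term_of_bounded : forall n s t, (forall x, cterm (s x)) -> is_term g h car far t ->
  (forall m u, iter rs m (tsubst s t) u -> m <= n) -> exists o k, E s t o k.
Proof.
  intro n. induction n as [n IHn] using (well_founded_induction lt_wf).
  intros s t Hs. revert n IHn. induction t using term_ind'; intros n IHn Ht Hb.
  - exists (Some (s x)), 0. constructor.
  - apply term_con in Ht. destruct Ht as [Hi [Hl Ht]].
    assert (Forall (fun t => exists o k, E s t o k) ts).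
    { rewrite Forall_forall in *. intros t Hin. apply (H t Hin n IHn (Ht t Hin)).
      intros m u Hu. destruct (in_split _ _ Hin) as [l1 [l2 ->]].
      apply (Hb m (Con i (map (tsubst s) l1 ++ u :: map (tsubst s) l2))).
      simpl. rewrite map_app. simpl. apply iter_ctx_con; auto. }
    destruct (Es_exists _ _ H0) as [os [k HE]]. eexists; eexists. constructor; eauto.
  - pose proof Ht as Ht0. apply term_fun in Ht. destruct Ht as [Hi [Hl Ht]].
    assert (Forall (fun t => exists o k, E s t o k) ts).
    { rewrite Forall_forall in *. intros t Hin. apply (H t Hin n IHn (Ht t Hin)).
      intros m u Hu. destruct (in_split _ _ Hin) as [l1 [l2 ->]].
      apply (Hb m (Fun i (map (tsubst s) l1 ++ u :: map (tsubst s) l2))).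
      simpl. rewrite map_app. simpl. apply iter_ctx_fun; auto. }
    destruct (Es_exists _ _ H0) as [os [k HE]].
    destruct (osome os) as [vs|] eqn:E1.
    2:{ exists None, k. eapply E_err; eauto. }
    destruct (classic (matches_cterm i vs)) as [[r [sg [Hr [Ef [Hsg Em]]]]]|Hn].
    2:{ exists None, k. eapply E_nom; eauto. }
    destruct (proj2 sound _ _ _ _ HE Hs Ht) as [ws [Hli HF]].
    pose proof E1 as E2. apply osome_some in E2. destruct (resrel_some _ _ HF _ E2) as [-> Hc].
    assert (Hst : iter rs (k + 1) (tsubst s (Fun i ts)) (tsubst sg (rrhs r))).
    { apply iter_trans with (y := Fun i vs). simpl. apply (liter_fun _ _ _ Hli [] i).
      apply iter_one. replace (Fun i vs) with (tsubst sg (rlhs r)). constructor; auto.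
      unfold rlhs. simpl. congruence. }
    pose proof (Hb _ _ Hst) as Hkn.
    destruct (wf_of r Hr) as [_ [_ [_ [Hrt _]]]].
    destruct (IHn (n - (k + 1)) ltac:(lia) sg (rrhs r) Hsg Hrt) as [o [m HE2]].
    { intros m u Hu. pose proof (Hb _ _ (iter_trans _ _ _ _ Hst _ _ Hu)). lia. }
    exists o, (k + S m). eapply E_rule; eauto.
Qed.

Definition DUMMY := Lam (LVar 0).
Definition lv (D l : nat) := LVar (D - 1 - l).
Definition enc (o : option term) := match o with Some v => scott g v | None => lbot g end.

Fixpoint sumf (f : nat -> nat) (n : nat) := match n with 0 => 0 | S n => sumf f n + f n end.
Lemma sumf_le f : forall n j, j < n -> f j <= sumf f n.
Proof. induction n; simpl; intros. lia. destruct (Nat.eq_dec j n). subst; lia. specialize (IHn j); lia. Qed.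

Definition cmax := sumf car g.
Definition CK := g + 2 + cmax.
Lemma car_le j : j < g -> car j <= cmax.
Proof. apply sumf_le. Qed.

Lemma DUMMY_closed : closed DUMMY.
Proof. cbv. lia. Qed.

Lemma lbot_closed : closed (lbot g).
Proof. unfold lbot, closed. apply closed_at_lams. simpl. lia. Qed.

Lemma lbot_value : is_value (lbot g).
Proof. simpl. auto. Qed.

Lemma scott_closed : forall v, cterm v -> closed (scott g v).
Proof.
  intro v; induction v using term_ind'; intro Hc.
  - destruct Hc.
  - apply cterm_con in Hc. destruct Hc as [Hi [Hl Hc]]. simpl. unfold closed.
    apply closed_at_lams. apply closed_at_apps. split. simpl. lia.
    rewrite Forall_map. rewrite Forall_forall in *. intros x Hx. apply closed_any. auto.
  - destruct Hc.
Qed.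

Lemma scott_value v : cterm v -> is_value (scott g v).
Proof. destruct v; simpl; intros []; auto. Qed.

Definition okres (o : option term) := forall v, o = Some v -> cterm v.

Lemma enc_closed o : okres o -> closed (enc o).
Proof. destruct o; simpl; intros H. apply scott_closed; auto. apply lbot_closed. Qed.

Lemma enc_value o : okres o -> is_value (enc o).
Proof. destruct o; simpl; intros H. apply scott_value; auto. auto. Qed.

Lemma nth_rev_lv {A} (lev : list A) D l d : length lev = D -> l < D -> nth (D - 1 - l) (rev lev) d = nth l lev d.
Proof. intros <- Hl. rewrite rev_nth by lia. f_equal. lia. Qed.

Lemma csub_lv lev D l : length lev = D -> l < D -> csub 0 (rev lev) (lv D l) = nth l lev DUMMY.
Proof.
  intros HD Hl. unfold lv. simpl. rewrite Nat.sub_0_r.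
  rewrite length_rev. destruct (D - 1 - l <? length lev) eqn:E; [|apply Nat.ltb_ge in E; lia].
  rewrite nth_indep with (d' := DUMMY) by (rewrite length_rev; lia).
  apply nth_rev_lv; auto.
Qed.

Lemma iter_conv {A} (Rl : A -> A -> Prop) n x y y' : iter Rl n x y -> y = y' -> iter Rl n x y'.
Proof. intros; subst; auto. Qed.

Lemma scott_select i ws cases d : i < g -> length cases = g -> Forall closed cases -> Forall is_value cases ->
  closed d -> is_value d -> Forall cterm ws ->
  iter bv (S g) (apps (scott g (Con i ws)) (cases ++ [d])) (apps (nth i cases d) (map (scott g) ws)).
Proof.
  intros Hi Hl Hc Hv Hcd Hvd Hw. unfold scott; fold (scott g).
  eapply iter_conv. apply beta_lams.
  - rewrite length_app; simpl; lia.
  - apply Forall_app; auto.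
  - apply Forall_app; auto.
  - rewrite csub_apps. rewrite rev_app_distr. simpl.
    rewrite Nat.sub_0_r. replace (g - i <? S (length (rev cases))) with true.
    2:{ symmetry. apply Nat.ltb_lt. rewrite length_rev. lia. }
    destruct (g - i) eqn:E. lia.
    f_equal.
    + rewrite rev_nth by lia. rewrite Hl. replace (g - S n) with i by lia. apply nth_indep. lia.
    + rewrite map_map. apply map_ext_in. intros a Ha. apply csub_closed.
      apply closed_any. apply scott_closed. rewrite Forall_forall in Hw; auto.
Qed.

Lemma bot_select cases d : length cases = g -> Forall closed cases -> Forall is_value cases ->
  closed d -> is_value d -> iter bv (S g) (apps (lbot g) (cases ++ [d])) d.
Proof.
  intros Hl Hc Hv Hcd Hvd. unfold lbot.
  eapply iter_conv. apply beta_lams.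
  - rewrite length_app; simpl; lia.
  - apply Forall_app; auto.
  - apply Forall_app; auto.
  - rewrite rev_app_distr. simpl. auto.
Qed.

Definition cases_of (body : nat -> lterm) (D : nat) : list lterm :=
  map (fun j => lams (car j) (Lam (body j))) (seq 0 g).

Definition gen_check (cont : nat -> lterm) (D l : nat) : lterm :=
  App (apps (lv D l) (cases_of (fun j => cont (D + car j + 1)) D ++ [Lam (lbot g)])) DUMMY.

Fixpoint gen_checks (ls : list nat) (cont : nat -> lterm) (D : nat) : lterm :=
  match ls with [] => cont D | l :: ls => gen_check (gen_checks ls cont) D l end.

Lemma closed_cases body D : (forall j, j < g -> closed_at (D + car j + 1) (body j)) ->
  Forall (closed_at D) (cases_of body D).
Proof.
  intros H. unfold cases_of. rewrite Forall_map, Forall_forall. intros j Hj.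
  apply in_seq in Hj. apply closed_at_lams. simpl. replace (S (D + car j)) with (D + car j + 1) by lia.
  apply H; lia.
Qed.

Lemma gen_check_closed cont D l : l < D -> (forall D', D <= D' -> closed_at D' (cont D')) ->
  closed_at D (gen_check cont D l).
Proof.
  intros Hl Hc. unfold gen_check. simpl. split; [|simpl; lia].
  apply closed_at_apps. split. unfold lv; simpl; lia.
  apply Forall_app. split. apply closed_cases. intros; apply Hc; lia.
  constructor; [|constructor]. change (closed_at (S D) (lbot g)). apply closed_any, lbot_closed.
Qed.

Lemma gen_checks_closed : forall ls cont D, Forall (fun l => l < D) ls ->
  (forall D', D <= D' -> closed_at D' (cont D')) -> closed_at D (gen_checks ls cont D).
Proof.
  induction ls; simpl; intros cont D Hl Hc. apply Hc; lia.
  inversion Hl; subst. apply gen_check_closed; auto. intros D' HD'. apply IHls.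
  rewrite Forall_forall in *. intros x Hx. specialize (H2 x Hx); lia.
  intros; apply Hc; lia.
Qed.

Lemma csub_cases body D env : length env = D -> Forall closed env ->
  map (csub 0 env) (cases_of body D) = cases_of (fun j => csub (car j + 1) env (body j)) 0.
Proof.
  intros HD Hc. unfold cases_of. rewrite map_map. apply map_ext. intro j.
  rewrite csub_lams. simpl. f_equal. f_equal. f_equal. lia.
Qed.

Lemma cases_values body D : Forall is_value (cases_of body D).
Proof. unfold cases_of. rewrite Forall_map, Forall_forall. intros. destruct (car x); simpl; auto. Qed.

Lemma nth_map_seq {A} (f : nat -> A) n j d : j < n -> nth j (map f (seq 0 n)) d = f j.
Proof.
  intro Hj. rewrite nth_indep with (d' := f 0) by (rewrite length_map, length_seq; auto).
  rewrite map_nth. rewrite seq_nth; auto.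
Qed.

Lemma nth_cases body D j d : j < g -> nth j (cases_of body D) d = lams (car j) (Lam (body j)).
Proof. intro Hj. unfold cases_of. apply (nth_map_seq (fun j => lams (car j) (Lam (body j)))); auto. Qed.

Lemma csub_three lev ws C : Forall closed lev -> Forall closed ws ->
  csub 0 [DUMMY] (csub 1 (rev ws) (csub (length ws + 1) (rev lev) C)) = csub 0 (rev (lev ++ ws ++ [DUMMY])) C.
Proof.
  intros H1 H2.
  replace (length ws + 1) with (1 + length (rev ws)) by (rewrite length_rev; lia).
  rewrite (csub_comp C 1 (rev ws) (rev lev)) by (apply Forall_rev; auto).
  rewrite (csub_comp _ 0 [DUMMY]).
  - rewrite !rev_app_distr. simpl. auto.
  - constructor; [apply DUMMY_closed|constructor].
  - apply Forall_app; split; apply Forall_rev; auto.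
Qed.

Lemma bv_conv M N N' : bv M N -> N = N' -> bv M N'.
Proof. intros; subst; auto. Qed.

Lemma check_some cont D l lev v : length lev = D -> Forall closed lev -> l < D ->
  nth l lev DUMMY = scott g v -> cterm v -> (forall D', D <= D' -> closed_at D' (cont D')) ->
  exists j ws, v = Con j ws /\ j < g /\ length ws = car j /\ Forall cterm ws /\
    iter bv (S g + (car j + 1)) (csub 0 (rev lev) (gen_check cont D l))
      (csub 0 (rev (lev ++ map (scott g) ws ++ [DUMMY])) (cont (D + car j + 1))).
Proof.
  intros HD Hc Hl Hn Hv Hcont.
  destruct v as [|j ws|]; [destruct Hv| |destruct Hv].
  apply cterm_con in Hv. destruct Hv as [Hj [Hlen Hws]].
  exists j, ws. repeat split; auto.
  assert (Hsc : Forall closed (map (scott g) ws)).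
  { rewrite Forall_map. rewrite Forall_forall in *. intros; apply scott_closed; auto. }
  unfold gen_check. simpl csub at 1. rewrite csub_apps, map_app. rewrite csub_lv by auto. rewrite Hn.
  rewrite csub_cases by (rewrite ?length_rev; auto; apply Forall_rev; auto).
  change (Lam (LVar 0)) with DUMMY.
  replace (map (csub 0 (rev lev)) [Lam (lbot g)]) with [Lam (lbot g)]
    by (unfold map; rewrite csub_closed; [reflexivity|change (closed_at 1 (lbot g)); apply closed_any, lbot_closed]).
  apply iter_trans with (y := App (apps (nth j (cases_of (fun j0 => csub (car j0 + 1) (rev lev) (cont (D + car j0 + 1))) 0) (Lam (lbot g))) (map (scott g) ws)) DUMMY).
  { apply iter_appl. apply scott_select; auto.
    - unfold cases_of. rewrite length_map, length_seq; auto.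
    - pose proof (closed_cases (fun j0 => csub (car j0 + 1) (rev lev) (cont (D + car j0 + 1))) 0) as Hcc.
      apply Hcc. intros j0 Hj0. simpl. apply closed_csub. rewrite length_rev. rewrite HD.
      replace (car j0 + 1 + D) with (D + car j0 + 1) by lia. apply Hcont; lia.
      apply Forall_rev; auto.
    - apply cases_values.
    - change (closed_at 1 (lbot g)). apply closed_any, lbot_closed.
    - simpl; auto. }
  rewrite nth_cases by auto.
  apply iter_trans with (y := App (csub 0 (rev (map (scott g) ws)) (Lam (csub (car j + 1) (rev lev) (cont (D + car j + 1))))) DUMMY).
  { apply iter_appl. apply beta_lams. rewrite length_map; auto. auto.
    rewrite Forall_map, Forall_forall. intros. apply scott_value. rewrite Forall_forall in Hws; auto. }
  simpl csub. apply iter_one. eapply bv_conv. constructor. simpl; auto.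
  unfold lsubst. rewrite substk_csub by apply DUMMY_closed.
  rewrite <- csub_three; auto. rewrite length_map, Hlen. auto.
Qed.

Lemma check_bot cont D l lev : length lev = D -> Forall closed lev -> l < D ->
  nth l lev DUMMY = lbot g -> (forall D', D <= D' -> closed_at D' (cont D')) ->
  iter bv (S g + 1) (csub 0 (rev lev) (gen_check cont D l)) (lbot g).
Proof.
  intros HD Hc Hl Hn Hcont.
  unfold gen_check. simpl csub at 1. rewrite csub_apps, map_app. rewrite csub_lv by auto. rewrite Hn.
  rewrite csub_cases by (rewrite ?length_rev; auto; apply Forall_rev; auto).
  change (Lam (LVar 0)) with DUMMY.
  replace (map (csub 0 (rev lev)) [Lam (lbot g)]) with [Lam (lbot g)]
    by (unfold map; rewrite csub_closed; [reflexivity|change (closed_at 1 (lbot g)); apply closed_any, lbot_closed]).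
  apply iter_trans with (y := App (Lam (lbot g)) DUMMY).
  { apply iter_appl. apply bot_select; auto.
    - unfold cases_of. rewrite length_map, length_seq; auto.
    - pose proof (closed_cases (fun j0 => csub (car j0 + 1) (rev lev) (cont (D + car j0 + 1))) 0) as Hcc.
      apply Hcc. intros j0 Hj0. simpl. apply closed_csub. rewrite length_rev. rewrite HD.
      replace (car j0 + 1 + D) with (D + car j0 + 1) by lia. apply Hcont; lia.
      apply Forall_rev; auto.
    - apply cases_values.
    - change (closed_at 1 (lbot g)). apply closed_any, lbot_closed.
    - simpl; auto. }
  apply iter_one. eapply bv_conv. constructor. simpl; auto.
  unfold lsubst. rewrite substk_csub by apply DUMMY_closed. apply csub_closed. apply lbot_closed.
Qed.

Definition lvok (lev : list lterm) (D : nat) (l : nat) (o : option term) :=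
  l < D /\ nth l lev DUMMY = enc o /\ okres o.

Lemma lvok_ext lev ext D D' l o : D <= D' -> length lev = D -> lvok lev D l o -> lvok (lev ++ ext) D' l o.
Proof. intros H1 H2 [H3 [H4 H5]]. repeat split; auto. lia. rewrite app_nth1 by lia. auto. Qed.

Lemma F2_In_l {A B} (P : A -> B -> Prop) l1 l2 x : Forall2 P l1 l2 -> In x l1 -> exists y, In y l2 /\ P x y.
Proof. induction 1; simpl; intros []; subst; eauto. destruct (IHForall2 H1) as [y' [? ?]]; eauto. Qed.

Lemma checks_ok : forall ls os cont D lev, length lev = D -> Forall closed lev ->
  Forall2 (lvok lev D) ls os -> (forall D', D <= D' -> closed_at D' (cont D')) ->
  (forall vs, osome os = Some vs -> exists j ext, j <= CK * length ls /\ Forall closed ext /\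
      iter bv j (csub 0 (rev lev) (gen_checks ls cont D)) (csub 0 (rev (lev ++ ext)) (cont (D + length ext)))) /\
  (osome os = None -> exists j, iter bv j (csub 0 (rev lev) (gen_checks ls cont D)) (lbot g)).
Proof.
  intros ls; induction ls as [|l ls IH]; intros os0 cont D lev HD Hc HF0 Hcont;
    (destruct os0 as [|o os]; try (inversion HF0; fail)).
  - simpl. split; [|discriminate]. intros vs _. exists 0, []. split. lia. split. constructor. rewrite app_nil_r. simpl. rewrite Nat.add_0_r. constructor.
  - assert (Hlo : lvok lev D l o /\ Forall2 (lvok lev D) ls os) by (inversion HF0; auto).
    destruct Hlo as [Hlo HF].
    assert (Hcl : forall D', D <= D' -> closed_at D' (gen_checks ls cont D')).
    { intros D' HD'. apply gen_checks_closed. rewrite Forall_forall. intros x Hx.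
      destruct (F2_In_l _ _ _ _ HF Hx) as [o' [_ [H _]]]. lia. intros; apply Hcont; lia. }
    destruct Hlo as [Hl [Hn Hok]]. destruct o as [v|].
    + destruct (check_some (gen_checks ls cont) D l lev v HD Hc Hl Hn (Hok v eq_refl) Hcl)
        as [j [ws [-> [Hj [Hlen [Hws Hit]]]]]].
      set (lev1 := lev ++ map (scott g) ws ++ [DUMMY]).
      assert (HF1 : Forall2 (lvok lev1 (D + car j + 1)) ls os).
      { eapply Forall2_impl; [|exact HF]. intros. apply lvok_ext with (D := D); auto. lia. }
      assert (Hc1 : Forall closed (map (scott g) ws ++ [DUMMY])).
      { apply Forall_app. split. rewrite Forall_map, Forall_forall. intros. apply scott_closed.
        rewrite Forall_forall in Hws; auto. constructor; [apply DUMMY_closed|constructor]. }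
      assert (HD1 : length lev1 = D + car j + 1).
      { unfold lev1. rewrite !length_app, length_map. simpl. lia. }
      destruct (IH os cont (D + car j + 1) lev1 HD1 ltac:(apply Forall_app; auto) HF1 ltac:(intros; apply Hcont; lia)) as [IH1 IH2].
      split.
      * intros vs E. simpl in E. destruct (osome os) as [vs'|] eqn:E2; [|discriminate].
        destruct (IH1 vs' eq_refl) as [j' [ext [Hj' [Hce Hit']]]].
        exists (S g + (car j + 1) + j'), ((map (scott g) ws ++ [DUMMY]) ++ ext). repeat split.
        -- change (length (l :: ls)) with (S (length ls)). rewrite Nat.mul_succ_r. pose proof (car_le j Hj). unfold CK in *. lia.
        -- apply Forall_app; auto.
        -- eapply iter_trans. exact Hit. eapply iter_conv. exact Hit'. unfold lev1.
           rewrite <- (app_assoc lev). f_equal. f_equal. rewrite !length_app, length_map; simpl. lia.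
      * intros E. simpl in E. destruct (osome os) as [vs'|] eqn:E2; [discriminate|].
        destruct (IH2 eq_refl) as [j' Hit']. exists (S g + (car j + 1) + j'). eapply iter_trans; eauto.
    + split; [intros vs E; simpl in E; discriminate|]. intros _.
      exists (S g + 1). apply check_bot; auto.
Qed.

Lemma lvok_seq : forall os k lev D, (forall i, i < length os -> nth (k + i) lev DUMMY = enc (nth i os None)) ->
  k + length os <= D -> Forall okres os -> Forall2 (lvok lev D) (seq k (length os)) os.
Proof.
  induction os as [|o os IH]; simpl; intros k lev D Hn HD Hok; constructor.
  - inversion Hok; subst. repeat split; auto. lia. specialize (Hn 0). rewrite Nat.add_0_r in Hn. apply Hn; lia.
  - inversion Hok; subst. apply IH; auto; [|lia]. intros i Hi. replace (S k + i) with (k + S i) by lia. apply (Hn (S i)). lia.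
Qed.

Lemma map_nth_seq_full {A} (L : list A) d : map (fun l => nth l L d) (seq 0 (length L)) = L.
Proof.
  apply nth_ext with (d := d) (d' := d). rewrite length_map, length_seq; auto.
  intros n Hn. rewrite length_map, length_seq in Hn.
  rewrite (nth_map_seq (fun l => nth l L d)); auto.
Qed.

Definition build (i D : nat) := lams (S g) (apps (LVar (g - i)) (map (fun l => LVar (D + g - l)) (seq 0 (car i)))).
Definition Cc i := lams (car i) (gen_checks (seq 0 (car i)) (build i) (car i)).

Lemma build_closed i D : car i <= D -> closed_at D (build i D).
Proof.
  intro H. unfold build. apply closed_at_lams. apply closed_at_apps. split. simpl; lia.
  rewrite Forall_map, Forall_forall. intros l Hl. apply in_seq in Hl. simpl. lia.
Qed.

Lemma Cc_closed i : closed (Cc i).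
Proof.
  unfold Cc, closed. apply closed_at_lams. simpl. apply gen_checks_closed.
  rewrite Forall_forall. intros l Hl. apply in_seq in Hl. lia.
  intros; apply build_closed; auto.
Qed.

Lemma build_val i vs ext : length vs = car i -> Forall closed ext -> Forall cterm vs ->
  csub 0 (rev (map (scott g) vs ++ ext)) (build i (car i + length ext)) = scott g (Con i vs).
Proof.
  intros Hl Hc Hv. unfold build. rewrite csub_lams. simpl (0 + S g).
  unfold scott; fold (scott g). f_equal. rewrite csub_apps. f_equal.
  - simpl. destruct (g - i <? S g) eqn:E; auto. apply Nat.ltb_ge in E; lia.
  - rewrite map_map.
    transitivity (map (fun l => nth l (map (scott g) vs) (LVar 0)) (seq 0 (car i))).
    2:{ rewrite <- Hl at 1. rewrite <- (length_map (scott g) vs). apply map_nth_seq_full. }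
    apply map_ext_in. intros l Hin. apply in_seq in Hin.
    simpl. destruct (car i + length ext + g - l <? S g) eqn:E; [apply Nat.ltb_lt in E; lia|].
    rewrite length_rev, length_app, length_map.
    destruct (car i + length ext + g - l - S g <? length vs + length ext) eqn:E2; [|apply Nat.ltb_ge in E2; lia].
    rewrite rev_nth by (rewrite length_app, length_map; lia).
    rewrite length_app, length_map. rewrite app_nth1 by (rewrite length_map; lia). f_equal. lia.
Qed.

Definition KC := cmax + CK * cmax.

Lemma enc_some vs : map enc (map Some vs) = map (scott g) vs.
Proof. rewrite map_map. auto. Qed.

Lemma Cc_ok i os : i < g -> length os = car i -> Forall okres os ->
  exists j, iter bv j (apps (Cc i) (map enc os)) (enc (option_map (Con i) (osome os))) /\
    (osome os <> None -> j <= KC).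
Proof.
  intros Hi Hl Hok.
  assert (Hcl : Forall closed (map enc os)).
  { rewrite Forall_map. eapply Forall_impl; [|exact Hok]. apply enc_closed. }
  assert (Hbeta : iter bv (car i) (apps (Cc i) (map enc os)) (csub 0 (rev (map enc os)) (gen_checks (seq 0 (car i)) (build i) (car i)))).
  { apply beta_lams. rewrite length_map; auto. auto. rewrite Forall_map. eapply Forall_impl; [|exact Hok]. apply enc_value. }
  assert (HF : Forall2 (lvok (map enc os) (car i)) (seq 0 (car i)) os).
  { rewrite <- Hl. apply lvok_seq; auto. intros k Hk. simpl.
    rewrite nth_indep with (d' := enc None) by (rewrite length_map; auto). apply map_nth. }
  destruct (checks_ok (seq 0 (car i)) os (build i) (car i) (map enc os) ltac:(rewrite length_map; auto) Hcl HF
     ltac:(intros; apply build_closed; auto)) as [H1 H2].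
  destruct (osome os) as [vs|] eqn:E.
  - destruct (H1 vs eq_refl) as [j [ext [Hj [Hce Hit]]]].
    exists (car i + j). split.
    + eapply iter_trans. exact Hbeta. eapply iter_conv. exact Hit.
      apply osome_some in E. subst os. rewrite enc_some. simpl.
      rewrite length_map in Hl. apply build_val; auto.
      rewrite Forall_map in Hok. eapply Forall_impl; [| exact Hok]. intros a Ha. apply Ha; auto.
    + intros _. rewrite length_seq in Hj. unfold KC. pose proof (car_le i Hi). nia.
  - destruct (H2 eq_refl) as [j Hit]. exists (car i + j). split.
    + eapply iter_trans. exact Hbeta. exact Hit.
    + intro C; exfalso; apply C; auto.
Qed.

Definition gsel (D l : nat) (body : nat -> lterm) (dfl : lterm) : lterm :=
  App (apps (lv D l) (cases_of body D ++ [Lam dfl])) DUMMY.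

Lemma gsel_closed D l body dfl : l < D -> (forall j, j < g -> closed_at (D + car j + 1) (body j)) ->
  closed_at (S D) dfl -> closed_at D (gsel D l body dfl).
Proof.
  intros Hl Hb Hd. unfold gsel. simpl. split; [|simpl; lia].
  apply closed_at_apps. split. unfold lv; simpl; lia.
  apply Forall_app. split. apply closed_cases. auto. constructor; auto.
Qed.

Lemma gsel_some body dfl D l lev v : length lev = D -> Forall closed lev -> l < D ->
  nth l lev DUMMY = scott g v -> cterm v -> (forall j, j < g -> closed_at (D + car j + 1) (body j)) ->
  closed_at (S D) dfl ->
  exists j ws, v = Con j ws /\ j < g /\ length ws = car j /\ Forall cterm ws /\
    iter bv (S g + (car j + 1)) (csub 0 (rev lev) (gsel D l body dfl))
      (csub 0 (rev (lev ++ map (scott g) ws ++ [DUMMY])) (body j)).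
Proof.
  intros HD Hc Hl Hn Hv Hb Hd.
  destruct v as [|j ws|]; [destruct Hv| |destruct Hv].
  apply cterm_con in Hv. destruct Hv as [Hj [Hlen Hws]].
  exists j, ws. repeat split; auto.
  assert (Hsc : Forall closed (map (scott g) ws)).
  { rewrite Forall_map. rewrite Forall_forall in *. intros; apply scott_closed; auto. }
  unfold gsel. simpl csub at 1. rewrite csub_apps, map_app. rewrite csub_lv by auto. rewrite Hn.
  rewrite csub_cases by (rewrite ?length_rev; auto; apply Forall_rev; auto).
  change (Lam (LVar 0)) with DUMMY.
  set (dfl' := csub 0 (rev lev) (Lam dfl)).
  replace (map (csub 0 (rev lev)) [Lam dfl]) with [dfl'] by reflexivity.
  assert (Hdc : closed dfl').
  { unfold dfl'. apply closed_csub. rewrite length_rev, HD. simpl. auto. apply Forall_rev; auto. }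
  apply iter_trans with (y := App (apps (nth j (cases_of (fun j0 => csub (car j0 + 1) (rev lev) (body j0)) 0) dfl') (map (scott g) ws)) DUMMY).
  { apply iter_appl. apply scott_select; auto.
    - unfold cases_of. rewrite length_map, length_seq; auto.
    - pose proof (closed_cases (fun j0 => csub (car j0 + 1) (rev lev) (body j0)) 0) as Hcc.
      apply Hcc. intros j0 Hj0. simpl. apply closed_csub. rewrite length_rev. rewrite HD.
      replace (car j0 + 1 + D) with (D + car j0 + 1) by lia. apply Hb; lia.
      apply Forall_rev; auto.
    - apply cases_values.
    - unfold dfl'; simpl; auto. }
  rewrite nth_cases by auto.
  apply iter_trans with (y := App (csub 0 (rev (map (scott g) ws)) (Lam (csub (car j + 1) (rev lev) (body j)))) DUMMY).
  { apply iter_appl. apply beta_lams. rewrite length_map; auto. auto.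
    rewrite Forall_map, Forall_forall. intros. apply scott_value. rewrite Forall_forall in Hws; auto. }
  simpl csub. apply iter_one. eapply bv_conv. constructor. simpl; auto.
  unfold lsubst. rewrite substk_csub by apply DUMMY_closed.
  rewrite <- csub_three; auto. rewrite length_map, Hlen. auto.
Qed.

Fixpoint psize (t : term) : nat :=
  match t with Var _ => 1 | Con _ ts => S (list_sum (map psize ts)) | Fun _ ts => S (list_sum (map psize ts)) end.

Definition msize (items : list (term * nat)) := list_sum (map (fun it => psize (fst it)) items).

Fixpoint gen_match (fu : nat) (items : list (term * nat)) (vm : nat -> nat)
  (succ : nat -> (nat -> nat) -> lterm) (fail : nat -> lterm) (D : nat) {struct fu} : lterm :=
  match fu with
  | 0 => fail D
  | S fu =>
    match items with
    | [] => succ D vm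
    | (Var y, l) :: rest => gen_match fu rest (fun x => if x =? y then l else vm x) succ fail D
    | (Con i ps, l) :: rest =>
        gsel D l (fun j => if j =? i then gen_match fu (combine ps (seq D (car j)) ++ rest) vm succ fail (D + car j + 1)
                           else fail (D + car j + 1)) (fail (D + 1))
    | (Fun _ _, _) :: _ => fail D
    end
  end.

Lemma gen_match_closed succ fail : forall fu items vm D, Forall (fun it => snd it < D) items -> (forall y, vm y < D) ->
  (forall D' vm', D <= D' -> (forall y, vm' y < D') -> closed_at D' (succ D' vm')) ->
  (forall D', D <= D' -> closed_at D' (fail D')) ->
  closed_at D (gen_match fu items vm succ fail D).
Proof.
  induction fu; intros items vm D Hit Hvm Hs Hf; simpl. apply Hf; lia.
  destruct items as [|[p l] rest]. apply Hs; auto.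
  inversion Hit; subst. simpl in H1.
  destruct p as [y|i ps|f ps].
  - apply IHfu; auto. intro x. destruct (x =? y); auto.
  - apply gsel_closed; auto.
    + intros j Hj. destruct (j =? i).
      * apply IHfu. apply Forall_app. split.
        -- rewrite Forall_forall. intros [p l'] Hin. apply in_combine_r in Hin. apply in_seq in Hin. simpl. lia.
        -- eapply Forall_impl; [|exact H2]. simpl. intros; lia.
        -- intros; specialize (Hvm y); lia.
        -- intros; apply Hs; auto; lia.
        -- intros; apply Hf; lia.
      * apply Hf; lia.
    + replace (S D) with (D + 1) by lia. apply Hf; lia.
  - apply Hf; lia.
Qed.

Lemma list_sum_app l1 l2 : list_sum (l1 ++ l2) = list_sum l1 + list_sum l2.
Proof. induction l1; simpl; lia. Qed.

Lemma msize_app a b : msize (a ++ b) = msize a + msize b.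
Proof. unfold msize. rewrite map_app, list_sum_app. auto. Qed.

Lemma msize_combine : forall ps ls, length ps = length ls -> msize (combine ps ls) = list_sum (map psize ps).
Proof. induction ps; destruct ls; simpl; intros; try discriminate; auto. unfold msize in *. simpl. rewrite IHps; auto. Qed.

Lemma map_fst_combine' {A B} : forall (ps : list A) (ls : list B), length ps = length ls -> map fst (combine ps ls) = ps.
Proof. induction ps; destruct ls; simpl; intros; try discriminate; auto. f_equal; auto. Qed.

Definition itok lev D (it : term * nat) (w : term) :=
  snd it < D /\ nth (snd it) lev DUMMY = scott g w /\ cterm w /\ is_pattern g car (fst it).

Lemma itok_ext lev ext D D' it w : D <= D' -> length lev = D -> itok lev D it w -> itok (lev ++ ext) D' it w.
Proof. intros H1 H2 [H3 [H4 H5]]. split. lia. split; auto. rewrite app_nth1 by lia. auto. Qed.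

Lemma itok_combine lev1 : forall ps ws D D1, length ps = length ws -> Forall (is_pattern g car) ps -> Forall cterm ws ->
  D + length ps <= D1 -> (forall k, k < length ws -> nth (D + k) lev1 DUMMY = scott g (nth k ws (Var 0))) ->
  Forall2 (itok lev1 D1) (combine ps (seq D (length ps))) ws.
Proof.
  induction ps as [|p ps IH]; destruct ws as [|w ws]; simpl; intros D D1 Hl Hp Hw HD Hn; try discriminate; constructor.
  - inversion Hp; inversion Hw; subst. repeat split; simpl; auto. lia. specialize (Hn 0). rewrite Nat.add_0_r in Hn. apply Hn; lia.
  - inversion Hp; inversion Hw; subst. apply IH; auto; try lia. intros k Hk. replace (S D + k) with (D + S k) by lia. apply (Hn (S k)); lia.
Qed.

Lemma map_tsubst_app s l1 l2 : map (tsubst s) (l1 ++ l2) = map (tsubst s) l1 ++ map (tsubst s) l2.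
Proof. apply map_app. Qed.

Lemma app_eq_len {A} (a1 a2 b1 b2 : list A) : length a1 = length b1 -> a1 ++ a2 = b1 ++ b2 -> a1 = b1 /\ a2 = b2.
Proof. revert b1; induction a1; destruct b1; simpl; intros; try discriminate; auto. injection H0 as -> H0. destruct (IHa1 b1); auto. subst; auto. Qed.

Lemma match_ok succ fail : forall fu items ws vm D lev, msize items < fu -> length lev = D -> Forall closed lev ->
  Forall2 (itok lev D) items ws -> NoDup (flat_map vars (map fst items)) -> (forall y, vm y < D) ->
  (forall D' vm', D <= D' -> (forall y, vm' y < D') -> closed_at D' (succ D' vm')) ->
  (forall D', D <= D' -> closed_at D' (fail D')) ->
  ((exists sg, map (tsubst sg) (map fst items) = ws) /\
   exists j ext vm', j <= CK * msize items /\ Forall closed ext /\ (forall y, vm' y < D + length ext) /\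
     iter bv j (csub 0 (rev lev) (gen_match fu items vm succ fail D)) (csub 0 (rev (lev ++ ext)) (succ (D + length ext) vm')) /\
     (forall sg, map (tsubst sg) (map fst items) = ws -> forall y, In y (flat_map vars (map fst items)) ->
        nth (vm' y) (lev ++ ext) DUMMY = scott g (sg y)) /\
     (forall y, ~ In y (flat_map vars (map fst items)) -> vm' y = vm y))
  \/
  ((~ exists sg, map (tsubst sg) (map fst items) = ws) /\
   exists j ext, j <= CK * msize items /\ Forall closed ext /\
     iter bv j (csub 0 (rev lev) (gen_match fu items vm succ fail D)) (csub 0 (rev (lev ++ ext)) (fail (D + length ext)))).
Proof.
  induction fu as [|fu IH]; intros items ws vm D lev Hfu HD Hc HF Hnd Hvm Hs Hf. lia.
  destruct items as [|[p l] rest].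
  - destruct ws; [|inversion HF]. left. split. exists (fun _ => Var 0); auto.
    exists 0, [], vm. rewrite app_nil_r, Nat.add_0_r. repeat split; auto. lia. constructor.
    intros _ _ y []. 
  - destruct ws as [|w wrest]; [inversion HF|].
    assert (Hit : itok lev D (p, l) w /\ Forall2 (itok lev D) rest wrest) by (inversion HF; auto).
    destruct Hit as [[Hl [Hn [Hw Hp]]] HF']. simpl fst in *. simpl snd in *.
    assert (Hms : msize ((p, l) :: rest) = psize p + msize rest) by reflexivity.
    destruct p as [y|i ps|f ps]; [| |destruct Hp].
    +
      simpl in Hnd. assert (Hny : ~ In y (flat_map vars (map fst rest)) /\ NoDup (flat_map vars (map fst rest))) by (inversion Hnd; auto). destruct Hny as [Hny Hnd'].
      set (vm1 := fun x => if x =? y then l else vm x).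
      assert (Hvm1 : forall x, vm1 x < D) by (intro x; unfold vm1; destruct (x =? y); auto).
      simpl in Hms. 
      destruct (IH rest wrest vm1 D lev ltac:(lia) HD Hc HF' Hnd' Hvm1 Hs Hf) as [[[sg Hsg] [j [ext [vm' [Hj [Hce [Hvm' [Hit [Hb Ho]]]]]]]]]|[Hno [j [ext [Hj [Hce Hit]]]]]].
      * left. split.
        { exists (fun x => if x =? y then w else sg x). simpl. f_equal. rewrite Nat.eqb_refl; auto.
          rewrite <- Hsg. apply map_ext_in. intros a Ha. apply tsubst_ext. intros x Hx.
          destruct (x =? y) eqn:E; auto. apply Nat.eqb_eq in E. subst. exfalso. apply Hny.
          apply in_flat_map. eauto. }
        exists j, ext, vm'. repeat split; auto. lia.
        -- intros sg' Hsg' x Hx. simpl in Hsg'. injection Hsg' as E1 E2.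
           simpl in Hx. destruct Hx as [<-|Hx].
           ++ rewrite Ho by auto. unfold vm1. rewrite Nat.eqb_refl. rewrite app_nth1 by lia. rewrite Hn. congruence.
           ++ apply Hb; auto.
        -- intros x Hx. rewrite Ho. unfold vm1. destruct (x =? y) eqn:E; auto.
           apply Nat.eqb_eq in E; subst. exfalso; apply Hx; simpl; auto.
           intro; apply Hx; simpl; auto.
      * right. split.
        { intros [sg Hsg]. apply Hno. exists sg. simpl in Hsg. injection Hsg; auto. }
        exists j, ext. repeat split; auto. lia.
    +
      apply pattern_con in Hp. destruct Hp as [Hi [Hlp Hps]].
      assert (Hbc : forall j, j < g -> closed_at (D + car j + 1)
         ((fun j => if j =? i then gen_match fu (combine ps (seq D (car j)) ++ rest) vm succ fail (D + car j + 1)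
                     else fail (D + car j + 1)) j)).
      { intros j Hj. simpl. destruct (j =? i).
        - apply gen_match_closed. apply Forall_app. split.
          + rewrite Forall_forall. intros [p' l'] Hin. apply in_combine_r in Hin. apply in_seq in Hin. simpl. lia.
          + rewrite Forall_forall. intros it Hin. destruct (F2_In_l _ _ _ _ HF' Hin) as [? [_ [? _]]]. lia.
          + intros; specialize (Hvm y); lia.
          + intros; apply Hs; auto; lia.
          + intros; apply Hf; lia.
        - apply Hf; lia. }
      destruct (gsel_some _ (fail (D + 1)) D l lev w HD Hc Hl Hn Hw Hbc ltac:(replace (S D) with (D + 1) by lia; apply Hf; lia))
        as [j [ws' [-> [Hj [Hlw [Hws' Hsel]]]]]].
      simpl gen_match.
      destruct (Nat.eq_dec j i) as [<-|Hne].
      * rewrite Nat.eqb_refl in Hsel.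
        set (lev1 := lev ++ map (scott g) ws' ++ [DUMMY]) in *.
        set (items' := combine ps (seq D (car j)) ++ rest).
        assert (HD1 : length lev1 = D + car j + 1) by (unfold lev1; rewrite !length_app, length_map; simpl; lia).
        assert (Hc1 : Forall closed (map (scott g) ws' ++ [DUMMY])).
        { apply Forall_app. split. rewrite Forall_map, Forall_forall. intros. apply scott_closed.
          rewrite Forall_forall in Hws'; auto. constructor; [apply DUMMY_closed|constructor]. }
        assert (HF1 : Forall2 (itok lev1 (D + car j + 1)) items' (ws' ++ wrest)).
        { apply Forall2_app.
          - rewrite <- Hlp. apply itok_combine; auto. lia. lia.
            intros k Hk. unfold lev1. rewrite app_nth2 by lia. replace (D + k - length lev) with k by lia.
            rewrite app_nth1 by (rewrite length_map; lia).
            rewrite nth_indep with (d' := scott g (Var 0)) by (rewrite length_map; lia). apply map_nth.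
          - eapply Forall2_impl; [|exact HF']. intros. apply itok_ext with (D := D); auto. lia. }
        assert (Hmf : map fst items' = ps ++ map fst rest).
        { unfold items'. rewrite map_app. rewrite map_fst_combine'; auto. rewrite length_seq; auto. }
        assert (Hnd1 : NoDup (flat_map vars (map fst items'))).
        { rewrite Hmf, flat_map_app. exact Hnd. }
        assert (Hsz : msize ((Con j ps, l) :: rest) = S (msize items')).
        { unfold items'. rewrite msize_app, msize_combine by (rewrite length_seq; auto). reflexivity. }
        assert (HCK : S g + (car j + 1) <= CK) by (pose proof (car_le j Hj); unfold CK; lia).
        assert (Hmatch : forall sg, map (tsubst sg) (map fst ((Con j ps, l) :: rest)) = Con j ws' :: wrest ->
                  map (tsubst sg) (map fst items') = ws' ++ wrest).
        { intros sg E. simpl in E. injection E as E1 E2. rewrite Hmf, map_app. congruence. }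
        destruct (IH items' (ws' ++ wrest) vm (D + car j + 1) lev1 ltac:(lia) HD1
                    ltac:(unfold lev1; apply Forall_app; auto) HF1 Hnd1 ltac:(intros; specialize (Hvm y); lia)
                    ltac:(intros; apply Hs; auto; lia) ltac:(intros; apply Hf; lia))
          as [[[sg Hsg] [j' [ext [vm' [Hj' [Hce [Hvm' [Hit [Hb Ho]]]]]]]]]|[Hno [j' [ext [Hj' [Hce Hit]]]]]].
        -- left. split.
           { exists sg. rewrite Hmf, map_app in Hsg. apply app_eq_len in Hsg.
             destruct Hsg as [E1 E2]. simpl. rewrite E1, E2. auto. rewrite length_map; congruence. }
           exists (S g + (car j + 1) + j'), ((map (scott g) ws' ++ [DUMMY]) ++ ext), vm'.
           assert (Hle : length ((map (scott g) ws' ++ [DUMMY]) ++ ext) = car j + 1 + length ext)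
             by (rewrite !length_app, length_map; simpl; lia).
           repeat split.
           ++ rewrite Hsz. rewrite Nat.mul_succ_r. lia.
           ++ apply Forall_app; auto.
           ++ intros y. specialize (Hvm' y). lia.
           ++ eapply iter_trans. exact Hsel. eapply iter_conv. exact Hit. unfold lev1.
              rewrite <- (app_assoc lev). f_equal. f_equal. lia.
           ++ intros sg' Hsg' y Hy. unfold lev1 in Hb. rewrite <- (app_assoc lev) in Hb.
              apply Hb. apply Hmatch; auto. rewrite Hmf, flat_map_app. exact Hy.
           ++ intros y Hy. apply Ho. rewrite Hmf, flat_map_app. exact Hy.
        -- right. split.
           { intros [sg Hsg]. apply Hno. exists sg. apply Hmatch; auto. }
           exists (S g + (car j + 1) + j'), ((map (scott g) ws' ++ [DUMMY]) ++ ext).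
           repeat split.
           ++ rewrite Hsz. rewrite Nat.mul_succ_r. lia.
           ++ apply Forall_app; auto.
           ++ eapply iter_trans. exact Hsel. eapply iter_conv. exact Hit. unfold lev1.
              rewrite <- (app_assoc lev). f_equal. f_equal. rewrite !length_app, length_map; simpl; lia.
      * apply Nat.eqb_neq in Hne. rewrite Hne in Hsel.
        right. split.
        { intros [sg Hsg]. simpl in Hsg. injection Hsg as E1 E2. apply Nat.eqb_neq in Hne. auto. }
        exists (S g + (car j + 1)), (map (scott g) ws' ++ [DUMMY]). repeat split.
        -- assert (1 <= msize ((Con i ps, l) :: rest)) by (rewrite Hms; simpl; lia).
           pose proof (car_le j Hj). unfold CK in *. nia.
        -- apply Forall_app. split. rewrite Forall_map, Forall_forall. intros. apply scott_closed.
           rewrite Forall_forall in Hws'; auto. constructor; [apply DUMMY_closed|constructor].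
        -- eapply iter_conv. exact Hsel. f_equal. f_equal. rewrite length_app, length_map; simpl; lia.
Qed.

Fixpoint codeT (vm : nat -> nat) (D : nat) (t : term) : lterm :=
  match t with
  | Var x => lv D (vm x)
  | Con i ts => apps (Cc i) (map (codeT vm D) ts)
  | Fun f ts => apps (apps (lv D f) (map (lv D) (seq 0 h))) (map (codeT vm D) ts)
  end.

Definition items (r : rule) (f : nat) := combine (rpats r) (seq h (far f)).

Fixpoint trial_rules (rls : list rule) (f : nat) (D : nat) : lterm :=
  match rls with
  | [] => lbot g
  | r :: rls' => gen_match (S (msize (items r f))) (items r f) (fun _ => 0)
                   (fun D' vm => codeT vm D' (rrhs r)) (fun D' => trial_rules rls' f D') D
  end.

Definition rules_of (f : nat) := filter (fun r => rfun r =? f) R.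
Definition body (f : nat) := gen_checks (seq h (far f)) (trial_rules (rules_of f) f) (h + far f).
Definition A (f : nat) := lams h (lams (far f) (body f)).
Definition As := map A (seq 0 h).
Definition Fn (f : nat) := apps (A f) As.
Definition Fval (f : nat) := lams (far f) (csub (far f) (rev As) (body f)).

Lemma codeT_closed : forall t vm D, is_term g h car far t -> (forall y, vm y < D) -> h <= D ->
  closed_at D (codeT vm D t).
Proof.
  intro t; induction t using term_ind'; intros vm D Ht Hvm Hh.
  - simpl. specialize (Hvm x). lia.
  - apply term_con in Ht. destruct Ht as [_ [_ Ht]]. simpl. apply closed_at_apps. split.
    apply closed_any, Cc_closed. rewrite Forall_map. rewrite Forall_forall in *. intros; auto.
  - apply term_fun in Ht. destruct Ht as [Hi [_ Ht]]. simpl. apply closed_at_apps. split.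
    + apply closed_at_apps. split. simpl; lia. rewrite Forall_map, Forall_forall. intros x Hx.
      apply in_seq in Hx. simpl; lia.
    + rewrite Forall_map. rewrite Forall_forall in *. intros; auto.
Qed.

Lemma rules_of_spec f r : In r (rules_of f) <-> In r R /\ rfun r = f.
Proof. unfold rules_of. rewrite filter_In. rewrite Nat.eqb_eq. tauto. Qed.

Lemma trial_closed f : forall rls D, f < h -> Forall (fun r => In r R /\ rfun r = f) rls -> h + far f <= D ->
  closed_at D (trial_rules rls f D).
Proof.
  induction rls as [|r rls IH]; intros D Hf Hr HD; cbn [trial_rules]. apply closed_any, lbot_closed.
  inversion Hr as [|? ? [Hin Hrf] Hr']; subst.
  apply gen_match_closed.
  - unfold items. rewrite Forall_forall. intros [p l] Hpl. apply in_combine_r in Hpl. apply in_seq in Hpl. simpl. lia.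
  - intros; lia.
  - intros D' vm' HD' Hvm'. apply codeT_closed; auto. destruct (wf_of r Hin) as [_ [_ [_ [? _]]]]; auto. lia.
  - intros D' HD'. apply IH; auto. lia.
Qed.

Lemma body_closed f : f < h -> closed_at (h + far f) (body f).
Proof.
  intro Hf. unfold body. apply gen_checks_closed.
  - rewrite Forall_forall. intros x Hx. apply in_seq in Hx. lia.
  - intros D' HD'. apply trial_closed; auto. rewrite Forall_forall. intros r Hr. apply rules_of_spec; auto.
Qed.

Lemma A_closed f : f < h -> closed (A f).
Proof. intro Hf. unfold A, closed. apply closed_at_lams. apply closed_at_lams. simpl. apply body_closed; auto. Qed.

Lemma As_closed : Forall closed As.
Proof. unfold As. rewrite Forall_map, Forall_forall. intros x Hx. apply in_seq in Hx. apply A_closed. lia. Qed.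

Lemma A_value f : f < h -> is_value (A f).
Proof. intro. unfold A. apply is_value_lams. lia. Qed.

Lemma As_values : Forall is_value As.
Proof. unfold As. rewrite Forall_map, Forall_forall. intros x Hx. apply in_seq in Hx. apply A_value. lia. Qed.

Lemma As_length : length As = h.
Proof. unfold As. rewrite length_map, length_seq; auto. Qed.

Lemma Fn_Fval f : f < h -> iter bv h (Fn f) (Fval f).
Proof.
  intro Hf. unfold Fn, A. eapply iter_conv. apply beta_lams. apply As_length. apply As_closed. apply As_values.
  rewrite csub_lams. simpl. auto.
Qed.

Definition inv (s : nat -> term) (t : term) (D : nat) (lev : list lterm) (vm : nat -> nat) :=
  (forall x, cterm (s x)) /\ is_term g h car far t /\ length lev = D /\ h <= D /\
  (forall i, i < h -> nth i lev DUMMY = A i) /\ Forall closed lev /\ (forall y, vm y < D) /\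
  (forall y, In y (vars t) -> nth (vm y) lev DUMMY = scott g (s y)).

Lemma csub_codeT_fun vm D lev f ts : length lev = D -> f < h -> h <= D -> (forall i, i < h -> nth i lev DUMMY = A i) ->
  csub 0 (rev lev) (codeT vm D (Fun f ts)) = apps (Fn f) (map (fun t => csub 0 (rev lev) (codeT vm D t)) ts).
Proof.
  intros HD Hf Hh HA. simpl. rewrite !csub_apps. rewrite csub_lv by lia. rewrite HA by auto.
  unfold Fn, As. rewrite !map_map. f_equal. f_equal. apply map_ext_in. intros i Hi. apply in_seq in Hi.
  rewrite csub_lv by lia. apply HA; lia.
Qed.

Lemma csub_codeT_con vm D lev i ts :
  csub 0 (rev lev) (codeT vm D (Con i ts)) = apps (Cc i) (map (fun t => csub 0 (rev lev) (codeT vm D t)) ts).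
Proof.
  simpl. rewrite csub_apps. rewrite csub_closed by (apply closed_any, Cc_closed). rewrite map_map. auto.
Qed.

Lemma inv_sub s i ts D lev vm t : inv s (Con i ts) D lev vm \/ inv s (Fun i ts) D lev vm -> In t ts -> inv s t D lev vm.
Proof.
  intros Hinv Hin.
  assert (Hsub : is_term g h car far t /\ forall y, In y (vars t) -> In y (flat_map vars ts)).
  { destruct Hinv as [[_ [Ht _]]|[_ [Ht _]]]; [apply term_con in Ht|apply term_fun in Ht];
    destruct Ht as [_ [_ Ht]]; rewrite Forall_forall in Ht; split; auto;
    intros y Hy; apply in_flat_map; eauto. }
  destruct Hsub as [Ht Hv].
  destruct Hinv as [[H1 [_ [H3 [H4 [H5 [H6 [H7 H8]]]]]]]|[H1 [_ [H3 [H4 [H5 [H6 [H7 H8]]]]]]]];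
    repeat split; auto; intros y Hy; apply H8; simpl; auto.
Qed.

Lemma list_sum_filter {A'} (F : A' -> nat) p : forall l, list_sum (map F (filter p l)) <= list_sum (map F l).
Proof. induction l; simpl; auto. destruct (p a); simpl; lia. Qed.

Lemma trial_ok (c0 : term) (Hc0 : cterm c0) f vs : f < h -> length vs = far f -> Forall cterm vs ->
  forall rls D lev, length lev = D -> Forall closed lev -> (forall i, i < h -> nth i lev DUMMY = A i) ->
  h + far f <= D -> (forall k, k < far f -> nth (h + k) lev DUMMY = scott g (nth k vs (Var 0))) ->
  Forall (fun r => In r R /\ rfun r = f) rls ->
  (forall r sg, In r rls -> (forall x, cterm (sg x)) -> map (tsubst sg) (rpats r) = vs ->
     exists j D' lev' vm', j <= CK * list_sum (map (fun r => msize (items r f)) rls) /\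
       iter bv j (csub 0 (rev lev) (trial_rules rls f D)) (csub 0 (rev lev') (codeT vm' D' (rrhs r))) /\
       inv sg (rrhs r) D' lev' vm') /\
  ((~ exists r sg, In r rls /\ (forall x, cterm (sg x)) /\ map (tsubst sg) (rpats r) = vs) ->
     exists j, iter bv j (csub 0 (rev lev) (trial_rules rls f D)) (lbot g)).
Proof.
  intros Hf Hlv Hvs rls. induction rls as [|r1 rls IH]; intros D lev HD Hc HA HhD Hargs Hrls.
  - split. intros r sg []. intros _. exists 0. cbn [trial_rules]. rewrite csub_closed by (apply closed_any, lbot_closed). constructor.
  - assert (Hx : (In r1 R /\ rfun r1 = f) /\ Forall (fun r => In r R /\ rfun r = f) rls) by (inversion Hrls; auto).
    destruct Hx as [[Hin1 Hrf1] Hrls']. subst f.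
    destruct (wf_of r1 Hin1) as [_ [Hlp [Hps [Hrt Hrv]]]].
    assert (HF : Forall2 (itok lev D) (items r1 (rfun r1)) vs).
    { unfold items. rewrite <- Hlp. apply itok_combine; auto. lia. lia. intros k Hk. apply Hargs. lia. }
    assert (Hmf : map fst (items r1 (rfun r1)) = rpats r1).
    { unfold items. apply map_fst_combine'. rewrite length_seq; auto. }
    assert (Hnd : NoDup (flat_map vars (map fst (items r1 (rfun r1))))).
    { rewrite Hmf. apply (linear_of r1 Hin1). }
    destruct (match_ok (fun D' vm => codeT vm D' (rrhs r1)) (fun D' => trial_rules rls (rfun r1) D')
                (S (msize (items r1 (rfun r1)))) (items r1 (rfun r1)) vs (fun _ => 0) D lev
                ltac:(lia) HD Hc HF Hnd ltac:(intros; cbv beta; lia)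
                ltac:(intros; apply codeT_closed; auto; lia)
                ltac:(intros; apply trial_closed; auto; lia))
      as [[[sg1 Hsg1] [j [ext [vm' [Hj [Hce [Hvm' [Hit [Hb Ho]]]]]]]]]|[Hno [j [ext [Hj [Hce Hit]]]]]].
    + rewrite Hmf in *. split.
      * intros r sg Hr Hsg Em.
        assert (r1 = r).
        { destruct Hr as [<-|Hr]; auto. rewrite Forall_forall in Hrls'. destruct (Hrls' r Hr) as [HinR Hrf].
          apply (ortho_unique r1 r sg1 sg Hin1 HinR). unfold rlhs. simpl. rewrite Hrf, Hsg1, Em. auto. }
        subst r. exists j, (D + length ext), (lev ++ ext), vm'.
        split; [simpl; lia|]. split; [cbn [trial_rules]; exact Hit|].
        unfold inv. repeat split; auto.
        all: try (rewrite length_app; lia).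
        all: try lia.
        all: try (intros i Hi; rewrite app_nth1 by lia; auto).
        all: try (apply Forall_app; auto).
        all: try (intros y Hy; apply Hb; auto; apply Hrv; unfold rlhs; simpl; auto).
      * intros Hnone. exfalso. apply Hnone.
        set (sg2 := fun x => if in_dec Nat.eq_dec x (flat_map vars (rpats r1)) then sg1 x else c0).
        exists r1, sg2. split; [left; auto|]. split.
        -- intro x. unfold sg2. destruct (in_dec Nat.eq_dec x (flat_map vars (rpats r1))) as [Hx|]; auto.
           apply in_flat_map in Hx. destruct Hx as [p [Hp Hx]].
           apply (subst_cterm_vars p sg1); auto.
           rewrite Forall_forall in Hvs. apply Hvs. rewrite <- Hsg1. apply in_map; auto.
        -- rewrite <- Hsg1. apply map_ext_in. intros p Hp. apply tsubst_ext. intros x Hx.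
           unfold sg2. destruct (in_dec Nat.eq_dec x (flat_map vars (rpats r1))) as [|Hn]; auto.
           exfalso; apply Hn. apply in_flat_map; eauto.
    + rewrite Hmf in *.
      assert (HargsE : forall k, k < far (rfun r1) -> nth (h + k) (lev ++ ext) DUMMY = scott g (nth k vs (Var 0))).
      { intros k Hk. rewrite app_nth1 by lia. auto. }
      destruct (IH (D + length ext) (lev ++ ext) ltac:(rewrite length_app; lia) ltac:(apply Forall_app; auto)
                  ltac:(intros i Hi; rewrite app_nth1 by lia; auto) ltac:(lia) HargsE Hrls') as [IH1 IH2].
      split.
      * intros r sg Hr Hsg Em. destruct Hr as [<-|Hr].
        { exfalso. apply Hno. eauto. }
        destruct (IH1 r sg Hr Hsg Em) as [j' [D' [lev' [vm'' [Hj' [Hit' Hinv]]]]]].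
        exists (j + j'), D', lev', vm''. split; [simpl; lia|]. split; [|exact Hinv].
        cbn [trial_rules]. eapply iter_trans; eauto.
      * intros Hnone. destruct (IH2 ltac:(intros [r [sg [Hr Hrest]]]; apply Hnone; exists r, sg; split; [right|]; auto))
          as [j' Hit']. exists (j + j'). cbn [trial_rules]. eapply iter_trans; eauto.
Qed.

Definition PR := list_sum (map (fun r => msize (items r (rfun r))) R).

Lemma trial_cost f : list_sum (map (fun r => msize (items r f)) (rules_of f)) <= PR.
Proof.
  rewrite (map_ext_in _ (fun r => msize (items r (rfun r)))).
  apply list_sum_filter. intros r Hr. apply rules_of_spec in Hr. destruct Hr as [_ ->]. auto.
Qed.

Lemma okres_some vs : Forall okres (map Some vs) -> Forall cterm vs.
Proof. rewrite Forall_map. intro H. eapply Forall_impl; [|exact H]. intros a Ha. apply Ha; auto. Qed.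

Lemma call_ok (c0 : term) (Hc0 : cterm c0) f os : f < h -> length os = far f -> Forall okres os ->
  (osome os = None -> exists j, iter bv j (apps (Fval f) (map enc os)) (lbot g)) /\
  (forall vs, osome os = Some vs -> ~ matches_cterm f vs -> exists j, iter bv j (apps (Fval f) (map enc os)) (lbot g)) /\
  (forall vs r sg, osome os = Some vs -> In r R -> rfun r = f -> (forall x, cterm (sg x)) -> map (tsubst sg) (rpats r) = vs ->
     exists j D' lev' vm', j <= far f + CK * far f + CK * PR /\
       iter bv j (apps (Fval f) (map enc os)) (csub 0 (rev lev') (codeT vm' D' (rrhs r))) /\
       inv sg (rrhs r) D' lev' vm').
Proof.
  intros Hf Hlo Hok.
  set (lev := As ++ map enc os).
  assert (Hcl : Forall closed (map enc os)).
  { rewrite Forall_map. eapply Forall_impl; [|exact Hok]. apply enc_closed. }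
  assert (Hbeta : iter bv (far f) (apps (Fval f) (map enc os)) (csub 0 (rev lev) (body f))).
  { unfold Fval. eapply iter_conv. apply beta_lams. rewrite length_map; auto. auto.
    rewrite Forall_map. eapply Forall_impl; [|exact Hok]. apply enc_value.
    unfold lev. rewrite rev_app_distr. rewrite <- csub_comp. rewrite length_rev, length_map, Hlo. auto.
    apply Forall_rev; auto. apply Forall_rev, As_closed. }
  assert (HD : length lev = h + far f) by (unfold lev; rewrite length_app, length_map, As_length; lia).
  assert (Hclev : Forall closed lev) by (unfold lev; apply Forall_app; split; auto; apply As_closed).
  assert (HA : forall i, i < h -> nth i lev DUMMY = A i).
  { intros i Hi. unfold lev. rewrite app_nth1 by (rewrite As_length; auto). unfold As.
    apply (nth_map_seq A); auto. }
  assert (Hnth : forall k, k < far f -> nth (h + k) lev DUMMY = enc (nth k os None)).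
  { intros k Hk. unfold lev. rewrite app_nth2 by (rewrite As_length; lia). rewrite As_length.
    replace (h + k - h) with k by lia. rewrite nth_indep with (d' := enc None) by (rewrite length_map; lia).
    apply map_nth. }
  assert (HF : Forall2 (lvok lev (h + far f)) (seq h (far f)) os).
  { rewrite <- Hlo. apply lvok_seq; auto. intros; apply Hnth; lia. }
  unfold body in Hbeta.
  destruct (checks_ok (seq h (far f)) os (trial_rules (rules_of f) f) (h + far f) lev HD Hclev HF
              ltac:(intros; apply trial_closed; [auto|rewrite Forall_forall; intros r Hr; apply rules_of_spec; auto|lia]))
    as [Hc1 Hc2].
  split; [|split].
  - intros E. destruct (Hc2 E) as [j Hit]. exists (far f + j). eapply iter_trans; eauto.
  - intros vs E Hnm. destruct (Hc1 vs E) as [j [ext [Hj [Hce Hit]]]].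
    apply osome_some in E. subst os.
    assert (Hvs := okres_some _ Hok). rewrite length_map in Hlo.
    destruct (trial_ok c0 Hc0 f vs Hf Hlo Hvs (rules_of f) (h + far f + length ext) (lev ++ ext)
                ltac:(rewrite length_app; lia) ltac:(apply Forall_app; auto)
                ltac:(intros i Hi; rewrite app_nth1 by lia; auto) ltac:(lia)) as [_ T2].
    { intros k Hk. rewrite app_nth1 by lia. rewrite Hnth by auto. simpl.
      rewrite nth_indep with (d' := Some (Var 0)) by (rewrite length_map; lia). rewrite map_nth. auto. }
    { rewrite Forall_forall. intros r Hr. apply rules_of_spec; auto. }
    destruct T2 as [j' Hit'].
    { intros [r [sg [Hr [Hsg Em]]]]. apply Hnm. apply rules_of_spec in Hr. destruct Hr.
      exists r, sg. auto. }
    exists (far f + j + j'). eapply iter_trans. eapply iter_trans. exact Hbeta. exact Hit. exact Hit'.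
  - intros vs r sg E Hr Hrf Hsg Em. destruct (Hc1 vs E) as [j [ext [Hj [Hce Hit]]]].
    apply osome_some in E. subst os.
    assert (Hvs := okres_some _ Hok). rewrite length_map in Hlo.
    destruct (trial_ok c0 Hc0 f vs Hf Hlo Hvs (rules_of f) (h + far f + length ext) (lev ++ ext)
                ltac:(rewrite length_app; lia) ltac:(apply Forall_app; auto)
                ltac:(intros i Hi; rewrite app_nth1 by lia; auto) ltac:(lia)) as [T1 _].
    { intros k Hk. rewrite app_nth1 by lia. rewrite Hnth by auto. simpl.
      rewrite nth_indep with (d' := Some (Var 0)) by (rewrite length_map; lia). rewrite map_nth. auto. }
    { rewrite Forall_forall. intros r' Hr'. apply rules_of_spec; auto. }
    destruct (T1 r sg ltac:(apply rules_of_spec; auto) Hsg Em) as [j' [D' [lev' [vm' [Hj' [Hit' Hinv]]]]]].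
    exists (far f + j + j'), D', lev', vm'. split; [|split; auto].
    + rewrite length_seq in Hj. pose proof (trial_cost f). nia.
    + eapply iter_trans. eapply iter_trans. exact Hbeta. exact Hit. exact Hit'.
Qed.

Fixpoint tcc (t : term) : nat :=
  match t with Var _ => 0 | Con _ ts => S (list_sum (map tcc ts)) | Fun _ ts => list_sum (map tcc ts) end.

Definition AF := sumf far h.
Definition RC := list_sum (map (fun r => tcc (rrhs r)) R).
Definition Kc := h + AF + CK * AF + CK * PR + KC * RC.

Lemma in_le_sum {A'} (F : A' -> nat) x : forall l, In x l -> F x <= list_sum (map F l).
Proof. induction l; simpl; intros []; subst; try lia. specialize (IHl H); lia. Qed.

Lemma okres_of :
  (forall s t o n, E s t o n -> (forall x, cterm (s x)) -> is_term g h car far t -> okres o) /\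
  (forall s ts os n, Es s ts os n -> (forall x, cterm (s x)) -> Forall (is_term g h car far) ts -> Forall okres os).
Proof.
  split.
  - intros s t o n HE Hs Ht. destruct (proj1 sound s t o n HE Hs Ht) as [w [_ Hr]].
    intros v ->. destruct Hr; auto.
  - intros s ts os n HE Hs Ht. destruct (proj2 sound s ts os n HE Hs Ht) as [ws [_ HF]].
    clear -HF. induction HF; constructor; auto. intros v ->. destruct H; auto.
Qed.

Lemma inv_terms s t D lev vm : inv s t D lev vm -> is_term g h car far t.
Proof. intros [_ [H _]]; auto. Qed.

Lemma sim (c0 : term) (Hc0 : cterm c0) :
  (forall s t o n, E s t o n -> forall D lev vm, inv s t D lev vm ->
     exists j, iter bv j (csub 0 (rev lev) (codeT vm D t)) (enc o) /\ (o <> None -> j <= Kc * n + KC * tcc t)) /\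
  (forall s ts os n, Es s ts os n -> forall D lev vm X X' j0, (forall t, In t ts -> inv s t D lev vm) ->
     iter bv j0 X X' ->
     exists j, iter bv j (apps X (map (fun t => csub 0 (rev lev) (codeT vm D t)) ts)) (apps X' (map enc os)) /\
       (osome os <> None -> j <= j0 + Kc * n + KC * list_sum (map tcc ts))).
Proof.
  apply E_Es_mut.
  - intros s x D lev vm Hinv. destruct Hinv as [_ [_ [HD [_ [_ [_ [Hvm Hb]]]]]]].
    exists 0. split; [|intros; lia]. cbn [codeT]. rewrite csub_lv by auto. rewrite Hb by (simpl; auto). constructor.
  - intros s i ts os n HEs IH D lev vm Hinv.
    pose proof Hinv as Hinv0. destruct Hinv as [Hs [Ht [HD _]]].
    apply term_con in Ht. destruct Ht as [Hi [Hl Ht]].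
    rewrite csub_codeT_con.
    destruct (IH D lev vm (Cc i) (Cc i) 0 ltac:(intros; apply (inv_sub s i ts); auto) ltac:(constructor))
      as [j [Hit Hj]].
    destruct (Cc_ok i os Hi ltac:(apply Es_length in HEs; congruence) (proj2 okres_of _ _ _ _ HEs Hs Ht))
      as [j' [Hit' Hj']].
    exists (j + j'). split. eapply iter_trans; eauto.
    intros Hne. destruct (osome os) eqn:E1; [|simpl in Hne; congruence].
    specialize (Hj ltac:(congruence)). specialize (Hj' ltac:(congruence)).
    simpl tcc. nia.
  - intros s f ts os n HEs IH E1 D lev vm Hinv.
    pose proof Hinv as Hinv0. destruct Hinv as [Hs [Ht [HD [Hh [HA _]]]]].
    apply term_fun in Ht. destruct Ht as [Hf [Hl Ht]].
    rewrite csub_codeT_fun by auto.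
    destruct (IH D lev vm (Fn f) (Fval f) h ltac:(intros; apply (inv_sub s f ts); auto) (Fn_Fval f Hf))
      as [j [Hit _]].
    destruct (call_ok c0 Hc0 f os Hf ltac:(apply Es_length in HEs; congruence) (proj2 okres_of _ _ _ _ HEs Hs Ht))
      as [C1 _].
    destruct (C1 E1) as [j' Hit']. exists (j + j'). split. eapply iter_trans; eauto. congruence.
  - intros s f ts os vs n HEs IH E1 Hnm D lev vm Hinv.
    pose proof Hinv as Hinv0. destruct Hinv as [Hs [Ht [HD [Hh [HA _]]]]].
    apply term_fun in Ht. destruct Ht as [Hf [Hl Ht]].
    rewrite csub_codeT_fun by auto.
    destruct (IH D lev vm (Fn f) (Fval f) h ltac:(intros; apply (inv_sub s f ts); auto) (Fn_Fval f Hf))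
      as [j [Hit _]].
    destruct (call_ok c0 Hc0 f os Hf ltac:(apply Es_length in HEs; congruence) (proj2 okres_of _ _ _ _ HEs Hs Ht))
      as [_ [C2 _]].
    destruct (C2 vs E1 Hnm) as [j' Hit']. exists (j + j'). split. eapply iter_trans; eauto. congruence.
  - intros s f ts os vs n r sg o m HEs IH E1 Hr Hrf Hsg Em HE IHE D lev vm Hinv.
    pose proof Hinv as Hinv0. destruct Hinv as [Hs [Ht [HD [Hh [HA _]]]]].
    apply term_fun in Ht. destruct Ht as [Hf [Hl Ht]].
    rewrite csub_codeT_fun by auto.
    destruct (IH D lev vm (Fn f) (Fval f) h ltac:(intros; apply (inv_sub s f ts); auto) (Fn_Fval f Hf))
      as [j [Hit Hj]].
    destruct (call_ok c0 Hc0 f os Hf ltac:(apply Es_length in HEs; congruence) (proj2 okres_of _ _ _ _ HEs Hs Ht))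
      as [_ [_ C3]].
    destruct (C3 vs r sg E1 Hr Hrf Hsg Em) as [j' [D' [lev' [vm' [Hj' [Hit' Hinv']]]]]].
    destruct (IHE D' lev' vm' Hinv') as [j'' [Hit'' Hj'']].
    exists (j + j' + j''). split. eapply iter_trans. eapply iter_trans. exact Hit. exact Hit'. exact Hit''.
    intros Hne. specialize (Hj ltac:(congruence)). specialize (Hj'' Hne).
    assert (far f <= AF) by (apply sumf_le; auto).
    assert (tcc (rrhs r) <= RC) by (apply (in_le_sum (fun r => tcc (rrhs r))); auto).
    simpl tcc. unfold Kc in *. nia.
  - intros s D lev vm X X' j0 _ Hit. exists j0. split; auto. simpl. intros; lia.
  - intros s t ts o os n m HE IH HEs IHs D lev vm X X' j0 Hinv Hit.
    destruct (IH D lev vm (Hinv t (or_introl eq_refl))) as [j1 [Hit1 Hj1]].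
    destruct (IHs D lev vm (App X (csub 0 (rev lev) (codeT vm D t))) (App X' (enc o)) (j0 + j1)
                ltac:(intros; apply Hinv; right; auto)) as [j [Hit2 Hj]].
    { eapply iter_trans. apply iter_appl. exact Hit. apply iter_appr. exact Hit1. }
    exists j. split. exact Hit2.
    intros Hne. simpl in Hne. destruct o; [|congruence]. destruct (osome os) eqn:E1; [|congruence].
    specialize (Hj ltac:(congruence)). specialize (Hj1 ltac:(congruence)). simpl. nia.
Qed.

Definition term_ok s t := exists o n, E s t o n.

Definition Qd (M : lterm) := exists K s t D lev vm,
  M = plug K (csub 0 (rev lev) (codeT vm D t)) /\ inv s t D lev vm /\ ~ term_ok s t.

Lemma args_split s ts : ~ (exists os n, Es s ts os n) -> exists pre t post, ts = pre ++ t :: post /\ ~ term_ok s t.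
Proof.
  intro H. destruct (classic (exists t, In t ts /\ ~ term_ok s t)) as [[t [Hin Ht]]|Hn].
  - destruct (in_split _ _ Hin) as [pre [post ->]]. eauto.
  - exfalso. apply H. apply Es_exists. rewrite Forall_forall. intros t Hin.
    apply NNPP. intro C. apply Hn. exists t; split; auto.
Qed.

Lemma iter_first {A'} (Rl : A' -> A' -> Prop) n x y : iter Rl n x y -> 0 < n -> exists x1, Rl x x1 /\ iter Rl (n - 1) x1 y.
Proof. intros H Hn. inversion H; subst. lia. exists y0. simpl. rewrite Nat.sub_0_r. auto. Qed.

Lemma Q_step (c0 : term) (Hc0 : cterm c0) : forall t K s D lev vm, inv s t D lev vm -> ~ term_ok s t ->
  exists M' k, iter bv (S k) (plug K (csub 0 (rev lev) (codeT vm D t))) M' /\ Qd M'.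
Proof.
  intro t; induction t using term_ind'; intros K s D lev vm Hinv Hnt.
  - exfalso. apply Hnt. exists (Some (s x)), 0. constructor.
  - destruct (classic (exists os n, Es s ts os n)) as [[os [n HEs]]|Hno].
    { exfalso. apply Hnt. eexists; eexists. constructor; eauto. }
    destruct (args_split s ts Hno) as [pre [t [post [-> Ht]]]].
    rewrite csub_codeT_con, map_app. simpl map. rewrite apps_split, <- plug_app.
    rewrite Forall_forall in H. apply (H t (in_elt _ _ _) _ s D lev vm); auto.
    apply (inv_sub s i (pre ++ t :: post)); auto. apply in_elt.
  - pose proof Hinv as Hinv0. destruct Hinv as [Hs [Ht [HD [Hh [HA _]]]]].
    apply term_fun in Ht. destruct Ht as [Hf [Hl Ht]].
    destruct (classic (exists os n, Es s ts os n)) as [[os [n HEs]]|Hno].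
    2:{ destruct (args_split s ts Hno) as [pre [t [post [-> Ht']]]].
        rewrite csub_codeT_fun, map_app by auto. simpl map. rewrite apps_split, <- plug_app.
        rewrite Forall_forall in H. apply (H t (in_elt _ _ _) _ s D lev vm); auto.
        apply (inv_sub s i (pre ++ t :: post)); auto. apply in_elt. }
    destruct (osome os) as [vs|] eqn:E1.
    2:{ exfalso. apply Hnt. eexists; eexists. eapply E_err; eauto. }
    destruct (classic (matches_cterm i vs)) as [[r [sg [Hr [Hrf [Hsg Em]]]]]|Hnm].
    2:{ exfalso. apply Hnt. eexists; eexists. eapply E_nom; eauto. }
    assert (Hnr : ~ term_ok sg (rrhs r)).
    { intros [o [m HE]]. apply Hnt. eexists; eexists. eapply E_rule; eauto. }
    pose proof (Fn_Fval i Hf) as HFF.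
    destruct (iter_first _ _ _ _ HFF ltac:(lia)) as [X1 [Hst1 Hrest]].
    destruct (proj2 (sim c0 Hc0) s ts os n HEs D lev vm X1 (Fval i) (h - 1)
                ltac:(intros; apply (inv_sub s i ts); auto) Hrest) as [j [Hit _]].
    destruct (call_ok c0 Hc0 i os Hf ltac:(apply Es_length in HEs; congruence) (proj2 okres_of _ _ _ _ HEs Hs Ht))
      as [_ [_ C3]].
    destruct (C3 vs r sg E1 Hr Hrf Hsg Em) as [j' [D' [lev' [vm' [Hj' [Hit' Hinv']]]]]].
    exists (plug K (csub 0 (rev lev') (codeT vm' D' (rrhs r)))), (j + j').
    split.
    + rewrite csub_codeT_fun by auto. econstructor.
      * apply bv_plug. apply bv_apps_l. exact Hst1.
      * apply iter_plug. eapply iter_trans; eauto.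
    + exists K, sg, (rrhs r), D', lev', vm'. auto.
Qed.

Lemma Qd_div (c0 : term) (Hc0 : cterm c0) M : Qd M -> diverges bv M.
Proof.
  apply div_from_Q. intros M0 [K [s [t [D [lev [vm [-> [Hinv Hnt]]]]]]]].
  eapply Q_step; eauto.
Qed.
End TRS.

Lemma flat_map_vars_var : forall l, flat_map vars (map Var l) = l.
Proof. induction l; simpl; f_equal; auto. Qed.

Lemma tcc_vars : forall l, list_sum (map tcc (map Var l)) = 0.
Proof. induction l; simpl; auto. Qed.

Theorem theorem2 (g h : nat) (car far : nat -> nat) (R : list rule) :
  orthogonal_crs g h car far R ->
  exists (F : nat -> lterm) (k : nat),
    forall (f : nat) (ts : list term),
      f < h -> length ts = far f -> Forall (is_cterm g car) ts ->
      (forall (v : term) (n : nat),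
          is_cterm g car v -> iter (rstep g car R) n (Fun f ts) v ->
          exists j, j <= k * n /\
            iter bv j (apps (F f) (map (scott g) ts)) (scott g v)) /\
      (forall v : term,
          star (rstep g car R) (Fun f ts) v -> rnormal g car R v -> ~ is_cterm g car v ->
          star bv (apps (F f) (map (scott g) ts)) (lbot g)) /\
      (diverges (rstep g car R) (Fun f ts) ->
          diverges bv (apps (F f) (map (scott g) ts))).
Proof.
  intros HR.
  destruct (classic (exists c, is_cterm g car c)) as [[c0 Hc0]|Hnoc].
  2:{ exists (fun _ => lbot g), 0. intros f ts Hf Hl Hts.
      assert (ts = []) as ->.
      { destruct ts as [|t ts]; auto. exfalso. inversion Hts; subst. apply Hnoc; eauto. }
      split; [|split].
      - intros v n Hv. exfalso; eauto.
      - intros. exists 0. simpl. constructor.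
      - intros [sq [H0 Hs]]. exfalso. specialize (Hs 0). rewrite H0 in Hs.
        apply rstep_fun_inv in Hs.
        destruct Hs as [[r [s [_ [Hs _]]]]|[l1 [a [l2 [a' [E _]]]]]].
        + apply Hnoc. exists (s 0). auto.
        + destruct l1; discriminate. }
  exists (Fn g h car far R), (Kc g h car far R).
  intros f ts Hf Hl Hts.
  set (s := fun x => nth x ts c0).
  set (t := Fun f (map Var (seq 0 (far f)))).
  set (D := h + far f).
  set (lev := As g h car far R ++ map (scott g) ts).
  set (vm := fun x => if x <? far f then h + x else 0).
  assert (Hs : forall x, is_cterm g car (s x)).
  { intro x. unfold s. destruct (Nat.lt_ge_cases x (length ts)).
    rewrite Forall_forall in Hts. apply Hts, nth_In; auto. rewrite nth_overflow; auto. }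
  assert (Hst : tsubst s t = Fun f ts).
  { unfold t. simpl. f_equal. rewrite map_map. simpl. rewrite <- Hl. unfold s. apply map_nth_seq_full. }
  assert (Ht : is_term g h car far t).
  { apply term_fun. repeat split; auto. rewrite length_map, length_seq; auto.
    rewrite Forall_map, Forall_forall. intros; simpl; auto. }
  assert (Hnthlev : forall k, k < far f -> nth (h + k) lev DUMMY = scott g (nth k ts c0)).
  { intros k Hk. unfold lev. rewrite app_nth2 by (rewrite As_length; lia). rewrite As_length.
    replace (h + k - h) with k by lia.
    rewrite nth_indep with (d' := scott g c0) by (rewrite length_map; lia). apply map_nth. }
  assert (HA : forall i, i < h -> nth i lev DUMMY = A g h car far R i).
  { intros i Hi. unfold lev. rewrite app_nth1 by (rewrite As_length; auto). unfold As.
    apply (nth_map_seq (A g h car far R)); auto. }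
  assert (HD : length lev = D).
  { unfold lev, D. rewrite length_app, length_map, As_length. lia. }
  assert (Hinv : inv g h car far R s t D lev vm).
  { unfold inv. split; [exact Hs|]. split; [exact Ht|]. split; [exact HD|]. split; [unfold D; lia|].
    split; [exact HA|]. split.
    { unfold lev. apply Forall_app. split. apply As_closed; auto. rewrite Forall_map.
      eapply Forall_impl; [|exact Hts]. intros; apply (scott_closed g car); auto. }
    split.
    { intro y. unfold vm. destruct (y <? far f) eqn:E. apply Nat.ltb_lt in E. unfold D; lia. unfold D; lia. }
    intros y Hy. unfold t in Hy. simpl in Hy. rewrite flat_map_vars_var in Hy. apply in_seq in Hy.
    unfold vm. replace (y <? far f) with true by (symmetry; apply Nat.ltb_lt; lia).
    rewrite Hnthlev by lia. auto. }
  assert (Hcode : csub 0 (rev lev) (codeT g h car vm D t) = apps (Fn g h car far R f) (map (scott g) ts)).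
  { unfold t. rewrite (csub_codeT_fun g h car far R); auto; [|unfold D; lia]. f_equal. rewrite map_map.
    transitivity (map (fun k => scott g (nth k ts c0)) (seq 0 (far f))).
    - apply map_ext_in. intros k Hk. apply in_seq in Hk. cbn [codeT]. rewrite csub_lv by (auto; unfold vm, D;
        destruct (k <? far f); lia).
      unfold vm. replace (k <? far f) with true by (symmetry; apply Nat.ltb_lt; lia). apply Hnthlev. lia.
    - rewrite <- (map_map (fun k => nth k ts c0) (scott g)). f_equal. rewrite <- Hl. apply map_nth_seq_full. }
  assert (Hbound : forall n v, iter (rstep g car R) n (Fun f ts) v -> rnormal g car R v ->
            exists o, E g car R s t o n /\ resrel g car R o v).
  { intros n v Hi Hn.
    destruct (term_of_bounded g h car far R HR n s t Hs Ht) as [o [k HE]].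
    { intros m u Hu. rewrite Hst in Hu. apply (bounded_iter g h car far R HR _ _ _ Hu _ _ Hi Hn). }
    destruct (proj1 (sound g h car far R HR) _ _ _ _ HE Hs Ht) as [w [Hw Hr]]. rewrite Hst in Hw.
    destruct (nf_unique g h car far R HR _ _ _ _ _ Hi Hn Hw (resrel_normal _ _ _ _ _ Hr)) as [-> ->].
    eauto. }
  split; [|split].
  - intros v n Hv Hi. destruct (Hbound n v Hi (cterm_normal g car R v Hv)) as [o [HE Hr]].
    destruct o as [v'|]; [|destruct Hr as [_ Hc]; contradiction].
    destruct Hr as [-> _].
    destruct (proj1 (sim g h car far R HR c0 Hc0) _ _ _ _ HE D lev vm Hinv) as [j [Hit Hj]].
    exists j. split.
    + specialize (Hj ltac:(congruence)). unfold t in Hj. simpl tcc in Hj. rewrite tcc_vars in Hj. lia.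
    + rewrite <- Hcode. exact Hit.
  - intros v [n Hi] Hn Hnc. destruct (Hbound n v Hi Hn) as [o [HE Hr]].
    destruct o as [v'|]. { destruct Hr as [-> Hc]; contradiction. }
    destruct (proj1 (sim g h car far R HR c0 Hc0) _ _ _ _ HE D lev vm Hinv) as [j [Hit _]].
    exists j. rewrite <- Hcode. exact Hit.
  - intros Hdiv. apply (Qd_div g h car far R HR c0 Hc0). exists [], s, t, D, lev, vm.
    split. cbn [plug]. symmetry. exact Hcode. split; auto.
    intros [o [k HE]]. destruct (proj1 (sound g h car far R HR) _ _ _ _ HE Hs Ht) as [w [Hw Hr]].
    rewrite Hst in Hw. apply (nf_no_div g h car far R HR _ _ _ Hw (resrel_normal _ _ _ _ _ Hr) Hdiv).
Qed.
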